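(* Suppose the chain is $\varrho$-metastable w.r.t. $\mathcal M=\{M_1,\dots,M_K\}$, $K\ge2$, and let $(\mathcal S_i)$ be a metastable partition. Let $M_i\in\mathcal M$, let $\mathcal B\subset\mathcal M\setminus\{M_i\}$ be nonempty with index set $I_{\mathcal B}$, and $B=\bigcup_{M\in\mathcal B}M$. Then for every $\delta\in(0,1/2)$, $$1-2\delta\le\frac{\mathrm{cap}(M_i,B)}{\mathrm{cap}\bigl(\mathcal U_{M_i}(\delta,B),\mathcal U_B(\delta,M_i)\bigr)}\le1,$$ and the set $X=\mathcal S_i\setminus\mathcal U_{M_i}(\delta,B)$ satisfies $\mu[X]\le\varrho\,\delta^{-1}\mu[M_i]$.
   Context: Setting: $\mathcal S$ countable; $(X(t))_{t\in\mathbb N_0}$ irreducible positive recurrent discrete-time Markov chain reversible w.r.t. its invariant probability measure $\mu$; $\mathbb P_\nu$ law started from $\nu$; $\tau_A=\inf\{t>0:X(t)\in A\}$; $\mu_A=\mu[\cdot\mid A]$. Equilibrium potential $h_{A,B}$: $1$ on $A$, $0$ on $B$, $\mathbb P_x[\tau_A<\tau_B]$ elsewhere; $\mathrm{cap}(A,B)=\sum_{x\in A}\mu(x)\mathbb P_x[\tau_B<\tau_A]$. Metastability: $\mathcal M=\{M_1,\dots,M_K\}$ nonempty pairwise disjoint, $\mathbf M=\bigcup_jM_j$; $p_{\mathrm{esc}}:=\max_{M\in\mathcal M}\mathbb P_{\mu_M}[\tau_{\mathbf M\setminus M}<\tau_M]$; $\varrho$-metastable means $|\mathcal M|\,p_{\mathrm{esc}}\le\varrho\min_{\emptyset\ne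 A\subset\mathcal S\setminus\mathbf M}\mathbb P_{\mu_A}[\tau_{\mathbf M}<\tau_A]$. Local valley $\mathcal V_i=\{x:\mathbb P_x[\tau_{M_i}<\tau_{\mathbf M\setminus M_i}]\ge\max_{j\ne i}\mathbb P_x[\tau_{M_j}<\tau_{\mathbf M\setminus M_j}]\}$; metastable partition: $\mathcal S=\biguplus_i\mathcal S_i$, $\mathcal S_i\subset\mathcal V_i$, $M_i\subset\mathcal S_i$. Harmonic neighbourhood: for disjoint nonempty subcollections $\mathcal A,\mathcal B\subset\mathcal M$ with index sets $I_{\mathcal A},I_{\mathcal B}$, $A=\bigcup_{M\in\mathcal A}M$, $B=\bigcup_{M\in\mathcal B}M$ and $\delta\in(0,1)$: $\mathcal U_A(\delta,B)=\{x\in\bigcup_{i\in I_{\mathcal A}}\mathcal S_i: h_{A,B}(x)\ge1-\delta\}$. *)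

(* Defs.v *)
From Stdlib Require Import Reals Lra List ClassicalEpsilon.
Open Scope R_scope.

Definition pif {A : Type} (P : Prop) (a b : A) : A :=
  if excluded_middle_informative P then a else b.

(** Value of a convergent series (chosen by epsilon; all series used below
    are series of nonnegative terms that converge under the hypotheses). *)
Definition series (f : nat -> R) : R :=
  epsilon (inhabits 0) (fun l => infinite_sum f l).

Definition lim (u : nat -> R) : R :=
  epsilon (inhabits 0) (fun l => Un_cv u l).

Section Chain.
Variable St : Type.

(** A countable state space is given by an enumeration [enum] listing every
    state exactly once ([None] entries are padding, allowing finite S). *)
Definition is_enum (enum : nat -> option St) : Prop :=
  (forall x, exists n, enum n = Some x) /\
  (forall n m x, enum n = Some x -> enum m = Some x -> n = m).

Variable enum : nat -> option St.

Definition sumS (f : St -> R) : R :=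
  series (fun n => match enum n with Some x => f x | None => 0 end).

Definition sumIn (A : St -> Prop) (f : St -> R) : R :=
  sumS (fun x => pif (A x) (f x) 0).

Variable p : St -> St -> R.

Definition stochastic : Prop :=
  (forall x y, 0 <= p x y) /\ (forall x, infinite_sum
      (fun n => match enum n with Some y => p x y | None => 0 end) 1).

Fixpoint path_pos (n : nat) (x y : St) : Prop :=
  match n with
  | O => x = y
  | S n => exists z, 0 < p x z /\ path_pos n z y
  end.

Definition irreducible : Prop := forall x y, exists n, path_pos n x y.

(** [avoid A n x] = P_x[ X(t) \notin A for t = 1..n ]. *)
Fixpoint avoid (A : St -> Prop) (n : nat) (x : St) : R :=
  match n with
  | O => 1
  | S n => sumS (fun y => p x y * pif (A y) 0 (avoid A n y))
  end.

(** Positive recurrence: E_x[tau_x] = sum_{n>=0} P_x[tau_x > n] < infinity. *)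
Definition positive_recurrent : Prop :=
  forall x, exists l, infinite_sum (fun n => avoid (fun y => y = x) n x) l.

Variable mu : St -> R.

Definition invariant_prob : Prop :=
  (forall x, 0 <= mu x) /\
  infinite_sum (fun n => match enum n with Some x => mu x | None => 0 end) 1 /\
  (forall y, sumS (fun x => mu x * p x y) = mu y).

Definition reversible : Prop := forall x y, mu x * p x y = mu y * p y x.

Definition chain_setting : Prop :=
  is_enum enum /\ stochastic /\ irreducible /\ positive_recurrent /\
  invariant_prob /\ reversible.

(** [hitn A B n x] = P_x[ tau_A < tau_B, tau_A <= n ], tau = first time > 0. *)
Fixpoint hitn (A B : St -> Prop) (n : nat) (x : St) : R :=
  match n with
  | O => 0
  | S n => sumS (fun y => p x y * pif (B y) 0 (pif (A y) 1 (hitn A B n y)))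
  end.

(** P_x[ tau_A < tau_B ]. *)
Definition hit (A B : St -> Prop) (x : St) : R := lim (fun n => hitn A B n x).

Definition muS (A : St -> Prop) : R := sumIn A mu.

(** P_{mu_A}[ tau_B < tau_A ] (mu_A = mu[. | A]). *)
Definition hit_from (A : St -> Prop) (C D : St -> Prop) : R :=
  sumIn A (fun x => mu x * hit C D x) / muS A.

Definition h (A B : St -> Prop) (x : St) : R :=
  pif (A x) 1 (pif (B x) 0 (hit A B x)).

Definition cap (A B : St -> Prop) : R := sumIn A (fun x => mu x * hit B A x).

Variable K : nat.
Variable M : nat -> St -> Prop.

Definition Mall (x : St) : Prop := exists j, (j < K)%nat /\ M j x.

Definition metastable_family : Prop :=
  (forall j, (j < K)%nat -> exists x, M j x) /\
  (forall j k x, (j < K)%nat -> (k < K)%nat -> j <> k -> M j x -> M k x -> False).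

Definition esc (j : nat) : R :=
  hit_from (M j) (fun x => Mall x /\ ~ M j x) (M j).

Definition p_esc : R := fold_right Rmax 0 (map esc (seq 0 K)).

Definition metastable (rho : R) : Prop :=
  forall A : St -> Prop, (exists x, A x) -> (forall x, A x -> ~ Mall x) ->
    INR K * p_esc <= rho * hit_from A Mall A.

Definition valley (i : nat) (x : St) : Prop :=
  forall j, (j < K)%nat -> j <> i ->
    hit (M j) (fun y => Mall y /\ ~ M j y) x <=
    hit (M i) (fun y => Mall y /\ ~ M i y) x.

Definition metastable_partition (Sp : nat -> St -> Prop) : Prop :=
  (forall x, exists j, (j < K)%nat /\ Sp j x) /\
  (forall j k x, (j < K)%nat -> (k < K)%nat -> j <> k -> Sp j x -> Sp k x -> False) /\
  (forall j x, (j < K)%nat -> Sp j x -> valley j x) /\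
  (forall j x, (j < K)%nat -> M j x -> Sp j x).

Definition unionM (I : nat -> Prop) (x : St) : Prop := exists j, I j /\ M j x.

Definition harm_nbhd (Sp : nat -> St -> Prop) (IA : nat -> Prop)
    (A B : St -> Prop) (delta : R) (x : St) : Prop :=
  (exists j, IA j /\ Sp j x) /\ 1 - delta <= h A B x.

End Chain.

Arguments sumS {St}. Arguments sumIn {St}. Arguments chain_setting {St}.
Arguments hit {St}. Arguments h {St}. Arguments cap {St}. Arguments muS {St}.
Arguments metastable_family {St}. Arguments metastable {St}.
Arguments metastable_partition {St}. Arguments unionM {St}.
Arguments harm_nbhd {St}. Arguments Mall {St}. Arguments hit_from {St}.

(* Main.v *)
Require Import Defs.
From Coquelicot Require Import Coquelicot.
From Stdlib Require Import Reals Lra Lia List ClassicalEpsilon FunctionalExtensionality PropExtensionality Classical.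
Open Scope R_scope.

Lemma ser_cv (a : nat -> R) : ex_series a -> Un_cv (sum_f_R0 a) (Series a).
Proof. intro H. apply Series_correct in H. apply is_series_Reals in H. exact H. Qed.

Lemma cv_ser (a : nat -> R) l : Un_cv (sum_f_R0 a) l -> ex_series a /\ Series a = l.
Proof. intro H. assert (is_series a l) by (apply is_series_Reals; exact H).
  split. exists l; auto. apply is_series_unique; auto. Qed.

Lemma ser_ext_ex (a b : nat -> R) : (forall n, a n = b n) -> ex_series a -> ex_series b.
Proof. intros; eapply ex_series_ext; eauto. Qed.

Lemma pos_cv (a : nat -> R) C : (forall n, 0 <= a n) -> (forall N, sum_f_R0 a N <= C) ->
  ex_series a /\ Series a <= C.
Proof.
  intros H0 HC.
  destruct (growing_cv (sum_f_R0 a)) as [l Hl].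
  - intro n. simpl. specialize (H0 (S n)). lra.
  - exists C. intros x [N ->]. auto.
  - destruct (cv_ser a l Hl) as [E1 E2]. split; auto. rewrite E2.
    apply Rle_cv_lim with (sum_f_R0 a) (fun _ => C); auto. intros eps He; exists O; intros.
    unfold R_dist; rewrite Rminus_diag, Rabs_R0; auto.
Qed.

Lemma psum_le (a : nat -> R) N : ex_series a -> (forall n, 0 <= a n) -> sum_f_R0 a N <= Series a.
Proof. intros. apply sum_incr; auto. apply ser_cv; auto. Qed.

Lemma term_le_ser (a : nat -> R) n : ex_series a -> (forall n, 0 <= a n) -> a n <= Series a.
Proof. intros. eapply Rle_trans; [|apply (psum_le a n); auto].
  destruct n. simpl; lra. simpl. assert (0 <= sum_f_R0 a n). apply cond_pos_sum; auto. lra. Qed.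

Lemma Series_nonneg (a : nat -> R) : ex_series a -> (forall n, 0 <= a n) -> 0 <= Series a.
Proof. intros. eapply Rle_trans; [apply (H0 O)|]. apply (term_le_ser a O); auto. Qed.

Lemma cv_const (c : R) : Un_cv (fun _ => c) c.
Proof. intros eps He; exists O; intros. unfold R_dist; rewrite Rminus_diag, Rabs_R0; auto. Qed.

Lemma sum0 N : sum_f_R0 (fun _ => 0) N = 0.
Proof. induction N; simpl; lra. Qed.

Lemma ser0_ex : ex_series (fun _ : nat => 0).
Proof. apply (cv_ser _ 0). eapply Un_cv_ext with (fun _ => 0). intro; rewrite sum0; auto. apply cv_const. Qed.

Lemma Series0 : Series (fun _ : nat => 0) = 0.
Proof. apply (cv_ser _ 0). eapply Un_cv_ext with (fun _ => 0). intro; rewrite sum0; auto. apply cv_const. Qed.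

Lemma ex_le (a b : nat -> R) : (forall n, Rabs (a n) <= b n) -> ex_series b -> ex_series a.
Proof. intros. apply (ex_series_le a b); auto. Qed.

Lemma ex_plus (a b : nat -> R) : ex_series a -> ex_series b -> ex_series (fun n => a n + b n).
Proof. intros. apply (ex_series_plus a b); auto. Qed.

Lemma ex_scal (c : R) (a : nat -> R) : ex_series a -> ex_series (fun n => c * a n).
Proof. intros. apply (ex_series_scal_l c a); auto. Qed.

Lemma ex_minus (a b : nat -> R) : ex_series a -> ex_series b -> ex_series (fun n => a n - b n).
Proof. intros. apply (ex_series_minus a b); auto. Qed.

Lemma Series_le' (a b : nat -> R) : (forall n, a n <= b n) -> ex_series a -> ex_series b -> Series a <= Series b.
Proof. intros. assert (Series b - Series a = Series (fun n => b n - a n)) by (rewrite Series_minus; auto).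
  assert (0 <= Series (fun n => b n - a n)). apply Series_nonneg. apply ex_minus; auto. intro n; specialize (H n); lra.
  lra. Qed.

Lemma Series_fsum (a : nat -> nat -> R) K : (forall k, ex_series (a k)) ->
  ex_series (fun n => sum_f_R0 (fun k => a k n) K) /\ (Series (fun n => sum_f_R0 (fun k => a k n) K) = sum_f_R0 (fun k => Series (a k)) K).
Proof. intro H. induction K; simpl.
  - split; auto.
  - destruct IHK as [E1 E2]. split. apply ex_plus; auto.
    rewrite Series_plus; auto. rewrite E2; auto. Qed.

Lemma cv_fsum (f : nat -> nat -> R) (g : nat -> R) K : (forall n, Un_cv (fun k => f k n) (g n)) ->
  Un_cv (fun k => sum_f_R0 (f k) K) (sum_f_R0 g K).
Proof. intro H. induction K; simpl; auto. apply CV_plus; auto. Qed.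

Lemma tonelli (a : nat -> nat -> R) : (forall n m, 0 <= a n m) -> (forall n, ex_series (a n)) ->
  ex_series (fun n => Series (a n)) ->
  (forall m, ex_series (fun n => a n m)) /\ ex_series (fun m => Series (fun n => a n m)) /\ (Series (fun m => Series (fun n => a n m)) = Series (fun n => Series (a n))).
Proof.
  intros H0 H1 H2.
  assert (Hm : forall m, ex_series (fun n => a n m)).
  { intro m. apply ex_le with (fun n => Series (a n)); auto. intro n. rewrite Rabs_right by (apply Rle_ge; auto).
    apply term_le_ser; auto. }
  split; auto.
  assert (HA : ex_series (fun m => Series (fun n => a n m)) /\ Series (fun m => Series (fun n => a n m)) <= Series (fun n => Series (a n))).
  { apply pos_cv. intro m. apply Series_nonneg; auto. intro N.
    destruct (Series_fsum (fun m n => a n m) N Hm) as [E1 E2]. rewrite <- E2.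
    apply Series_le; auto. intro n; split. apply cond_pos_sum; auto. apply psum_le; auto. }
  destruct HA as [HA1 HA2]. split; auto.
  apply Rle_antisym; auto.
  apply Rle_cv_lim with (sum_f_R0 (fun n => Series (a n))) (fun _ => Series (fun m => Series (fun n => a n m))).
  - intro N. destruct (Series_fsum a N H1) as [E1 E2]. rewrite <- E2.
    apply Series_le; auto. intro m; split. apply cond_pos_sum; auto. intros; auto.
    replace (sum_f_R0 (fun k => a k m) N) with (sum_f_R0 (fun n => a n m) N) by reflexivity. apply psum_le; auto.
  - apply ser_cv; auto.
  - apply cv_const.
Qed.

Lemma mct (f : nat -> nat -> R) (g : nat -> R) C :
  (forall k n, 0 <= f k n) -> (forall k n, f k n <= f (S k) n) ->
  (forall n, Un_cv (fun k => f k n) (g n)) -> (forall k, ex_series (f k)) ->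
  (forall k, Series (f k) <= C) ->
  ex_series g /\ Un_cv (fun k => Series (f k)) (Series g).
Proof.
  intros H0 Hinc Hcv Hex HC.
  assert (Hg : forall k n, f k n <= g n).
  { intros k n. apply (growing_ineq (fun k => f k n)); auto. intro; auto. }
  assert (Hg0 : forall n, 0 <= g n). { intro n; eapply Rle_trans; [apply (H0 O n)|apply Hg]. }
  assert (Hpart : forall N, sum_f_R0 g N <= C).
  { intro N. apply Rle_cv_lim with (fun k => sum_f_R0 (f k) N) (fun _ => C).
    intro k. eapply Rle_trans; [apply psum_le; auto|apply HC]. apply cv_fsum; auto. apply cv_const. }
  destruct (pos_cv g C Hg0 Hpart) as [Eg _]. split; auto.
  destruct (growing_cv (fun k => Series (f k))) as [L HL].
  - intro k. apply Series_le; [intro n; split; auto|auto].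
  - exists (Series g). intros x [k ->]. apply Series_le; [intro n; split; auto|auto].
  - replace (Series g) with L; auto.
    apply Rle_antisym.
    + apply Rle_cv_lim with (fun k => Series (f k)) (fun _ => Series g); auto.
      intro k. apply Series_le; [intro n; split; auto|auto]. apply cv_const.
    + apply Rle_cv_lim with (sum_f_R0 g) (fun _ => L); [|apply ser_cv; auto|apply cv_const].
      intro N. apply Rle_cv_lim with (fun k => sum_f_R0 (f k) N) (fun _ => L).
      intro k. eapply Rle_trans; [apply psum_le; auto|]. apply (growing_ineq (fun k => Series (f k))); auto.
      intro k'. apply Series_le; [intro n; split; auto|auto].
      apply cv_fsum; auto. apply cv_const.
Qed.

Section Sums.
Variable St : Type.
Variable enum : nat -> option St.

Definition F (f : St -> R) (n : nat) : R := match enum n with Some x => f x | None => 0 end.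
Definition smb (f : St -> R) : Prop := ex_series (F f).

Lemma sumS_eq f : smb f -> sumS enum f = Series (F f).
Proof.
  intro H. unfold sumS, series.
  assert (E : exists l, infinite_sum (F f) l).
  { exists (Series (F f)). apply is_series_Reals. apply Series_correct. exact H. }
  pose proof (epsilon_spec (inhabits 0) (fun l => infinite_sum (F f) l) E) as H1.
  apply (uniqueness_sum (F f)). exact H1. apply is_series_Reals. apply Series_correct. exact H.
Qed.

Lemma sumS_ext f g : (forall x, f x = g x) -> sumS enum f = sumS enum g.
Proof. intro H. replace f with g; auto. apply functional_extensionality; intro; auto. Qed.

Lemma smb_ext f g : (forall x, f x = g x) -> smb f -> smb g.
Proof. intro H. replace g with f; auto. apply functional_extensionality; intro; auto. Qed.

Lemma smb_le f g : (forall x, Rabs (f x) <= g x) -> smb g -> smb f.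
Proof. intros H Hg. apply ex_le with (F g); auto. intro n. unfold F. destruct (enum n); auto.
  rewrite Rabs_R0; lra. Qed.

Lemma smb_plus f g : smb f -> smb g -> smb (fun x => f x + g x).
Proof. intros. eapply ser_ext_ex; [|apply (ex_plus (F f) (F g)); auto]. intro n; unfold F; destruct (enum n); lra. Qed.

Lemma smb_scal c f : smb f -> smb (fun x => c * f x).
Proof. intros. eapply ser_ext_ex; [|apply (ex_scal c (F f)); auto]. intro n; unfold F; destruct (enum n); lra. Qed.

Lemma smb_minus f g : smb f -> smb g -> smb (fun x => f x - g x).
Proof. intros. eapply ser_ext_ex; [|apply (ex_minus (F f) (F g)); auto]. intro n; unfold F; destruct (enum n); lra. Qed.

Lemma smb_0 : smb (fun _ => 0).
Proof. eapply ser_ext_ex; [|apply ser0_ex]. intro n; unfold F; destruct (enum n); lra. Qed.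

Lemma sumS_0 : sumS enum (fun _ => 0) = 0.
Proof. rewrite sumS_eq by apply smb_0. rewrite (Series_ext _ (fun _ => 0)). apply Series0. intro n; unfold F; destruct (enum n); lra. Qed.

Lemma sumS_plus f g : smb f -> smb g -> sumS enum (fun x => f x + g x) = sumS enum f + sumS enum g.
Proof. intros. rewrite !sumS_eq; auto using smb_plus. rewrite <- Series_plus; auto.
  apply Series_ext. intro n; unfold F; destruct (enum n); lra. Qed.

Lemma sumS_scal c f : smb f -> sumS enum (fun x => c * f x) = c * sumS enum f.
Proof. intros. rewrite !sumS_eq; auto using smb_scal. rewrite <- Series_scal_l.
  apply Series_ext. intro n; unfold F; destruct (enum n); lra. Qed.

Lemma sumS_minus f g : smb f -> smb g -> sumS enum (fun x => f x - g x) = sumS enum f - sumS enum g.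
Proof. intros. rewrite !sumS_eq; auto using smb_minus. rewrite <- Series_minus; auto.
  apply Series_ext. intro n; unfold F; destruct (enum n); lra. Qed.

Lemma sumS_nonneg f : smb f -> (forall x, 0 <= f x) -> 0 <= sumS enum f.
Proof. intros. rewrite sumS_eq; auto. apply Series_nonneg; auto. intro n; unfold F; destruct (enum n); auto; lra. Qed.

Lemma sumS_le f g : smb f -> smb g -> (forall x, f x <= g x) -> sumS enum f <= sumS enum g.
Proof. intros. rewrite !sumS_eq; auto. apply Series_le'; auto. intro n; unfold F; destruct (enum n); auto; lra. Qed.

Lemma term_le f y : is_enum St enum -> smb f -> (forall x, 0 <= f x) -> f y <= sumS enum f.
Proof. intros [He _] Hs H0. rewrite sumS_eq; auto. destruct (He y) as [n Hn].
  replace (f y) with (F f n) by (unfold F; rewrite Hn; auto). apply term_le_ser; auto.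
  intro m; unfold F; destruct (enum m); auto; lra. Qed.

Lemma sumS_zero_inv f y : is_enum St enum -> smb f -> (forall x, 0 <= f x) -> sumS enum f = 0 -> f y = 0.
Proof. intros. pose proof (term_le f y H H0 H1). specialize (H1 y). lra. Qed.

Lemma sum_single_aux (a : nat -> R) n0 : (forall n, n <> n0 -> a n = 0) ->
  forall N, (n0 <= N)%nat -> sum_f_R0 a N = a n0.
Proof. intros H N HN. induction N.
  - assert (n0 = O) by lia. subst; auto.
  - destruct (Nat.eq_dec n0 (S N)). subst. simpl. rewrite (sum_eq_R0 a N). lra. intros; apply H; lia.
    simpl. rewrite IHN by lia. rewrite (H (S N)) by auto. lra. Qed.

Lemma sumS_single (f : St -> R) y : is_enum St enum ->
  smb (fun z => pif (z = y) (f z) 0) /\ sumS enum (fun z => pif (z = y) (f z) 0) = f y.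
Proof.
  intros [He Hu]. destruct (He y) as [n0 Hn0].
  assert (Hz : forall n, n <> n0 -> F (fun z => pif (z = y) (f z) 0) n = 0).
  { intros n Hn. unfold F. destruct (enum n) eqn:E; auto. unfold pif.
    destruct (excluded_middle_informative (s = y)); auto. subst. exfalso. apply Hn. eapply Hu; eauto. }
  assert (Hv : F (fun z => pif (z = y) (f z) 0) n0 = f y).
  { unfold F. rewrite Hn0. unfold pif. destruct (excluded_middle_informative (y = y)); tauto. }
  assert (Hc : Un_cv (sum_f_R0 (F (fun z => pif (z = y) (f z) 0))) (f y)).
  { intros eps Heps. exists n0. intros n Hn. rewrite (sum_single_aux _ n0 Hz n Hn), Hv.
    unfold R_dist; rewrite Rminus_diag, Rabs_R0; auto. }
  destruct (cv_ser _ _ Hc) as [E1 E2]. split. exact E1. rewrite sumS_eq; auto.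
Qed.

Lemma F_sumS (a : St -> St -> R) n : (forall x, smb (a x)) ->
  F (fun x => sumS enum (a x)) n = Series (fun m => match enum n with Some x => F (a x) m | None => 0 end).
Proof. intro H. unfold F at 1. destruct (enum n).
  - rewrite sumS_eq; auto.
  - symmetry. apply Series0. Qed.

Lemma tonelliS (a : St -> St -> R) : is_enum St enum -> (forall x y, 0 <= a x y) -> (forall x, smb (a x)) ->
  smb (fun x => sumS enum (a x)) ->
  (forall y, smb (fun x => a x y)) /\ smb (fun y => sumS enum (fun x => a x y)) /\
  (sumS enum (fun y => sumS enum (fun x => a x y)) = sumS enum (fun x => sumS enum (a x))).
Proof.
  intros [He Hu] H0 H1 H2.
  set (A := fun n m => match enum n with Some x => F (a x) m | None => 0 end).
  assert (HA0 : forall n m, 0 <= A n m). { intros; unfold A, F; destruct (enum n); destruct (enum m); auto; lra. }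
  assert (HA1 : forall n, ex_series (A n)). { intro n; unfold A; destruct (enum n). apply H1. apply ser0_ex. }
  assert (HA2 : ex_series (fun n => Series (A n))).
  { eapply ser_ext_ex; [|apply H2]. intro n. rewrite F_sumS; auto. }
  destruct (tonelli A HA0 HA1 HA2) as [T1 [T2 T3]].
  assert (Hcf : forall m y, enum m = Some y -> (fun n => A n m) = F (fun x => a x y)).
  { intros m y Em. apply functional_extensionality; intro n. unfold A, F. rewrite Em. destruct (enum n); auto. }
  assert (Hcn : forall m, enum m = None -> (fun n => A n m) = (fun _ => 0)).
  { intros m Em. apply functional_extensionality; intro n. unfold A, F. rewrite Em. destruct (enum n); auto. }
  assert (Hy : forall y, smb (fun x => a x y)).
  { intro y. destruct (He y) as [m Em]. unfold smb. rewrite <- (Hcf m y Em). apply T1. }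
  assert (Hout : F (fun y => sumS enum (fun x => a x y)) = (fun m => Series (fun n => A n m))).
  { apply functional_extensionality; intro m. unfold F at 1. destruct (enum m) eqn:Em.
    - rewrite sumS_eq by apply Hy. rewrite (Hcf m s Em). auto.
    - rewrite (Hcn m Em). symmetry; apply Series0. }
  assert (Hin : F (fun x => sumS enum (a x)) = (fun n => Series (A n))).
  { apply functional_extensionality; intro n. apply F_sumS; auto. }
  split; auto. split. unfold smb. rewrite Hout. auto.
  rewrite (sumS_eq (fun y => sumS enum (fun x => a x y))). rewrite Hout.
  rewrite (sumS_eq (fun x => sumS enum (a x))) by auto. rewrite Hin. auto.
  unfold smb; rewrite Hout; auto.
Qed.

Lemma fubiniS (a b : St -> St -> R) : is_enum St enum -> (forall x y, Rabs (a x y) <= b x y) ->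
  (forall x, smb (b x)) -> smb (fun x => sumS enum (b x)) ->
  (forall x, smb (a x)) /\ smb (fun x => sumS enum (a x)) /\
  (sumS enum (fun y => sumS enum (fun x => a x y)) = sumS enum (fun x => sumS enum (a x))).
Proof.
  intros He Hab Hb1 Hb2.
  assert (Hb0 : forall x y, 0 <= b x y). { intros; eapply Rle_trans; [apply Rabs_pos|apply Hab]. }
  set (u := fun x y => b x y + a x y). set (v := fun x y => b x y - a x y).
  assert (Hu0 : forall x y, 0 <= u x y). { intros; unfold u; specialize (Hab x y); apply Rabs_le_between in Hab. lra. }
  assert (Hv0 : forall x y, 0 <= v x y). { intros; unfold v; specialize (Hab x y); apply Rabs_le_between in Hab. lra. }
  assert (Ha1 : forall x, smb (a x)). { intro x. apply smb_le with (b x); auto. }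
  assert (Hu1 : forall x, smb (u x)). { intro x. apply smb_plus; auto. }
  assert (Hv1 : forall x, smb (v x)). { intro x. apply smb_minus; auto. }
  assert (Hsu : forall x, sumS enum (u x) <= 2 * sumS enum (b x)).
  { intro x. rewrite <- sumS_scal by auto. apply sumS_le; auto. apply smb_scal; auto.
    intro y. unfold u. specialize (Hab x y). apply Rabs_le_between in Hab. lra. }
  assert (Hsv : forall x, sumS enum (v x) <= 2 * sumS enum (b x)).
  { intro x. rewrite <- sumS_scal by auto. apply sumS_le; auto. apply smb_scal; auto.
    intro y. unfold v. specialize (Hab x y). apply Rabs_le_between in Hab. lra. }
  assert (Hu2 : smb (fun x => sumS enum (u x))).
  { apply smb_le with (fun x => 2 * sumS enum (b x)). intro x. rewrite Rabs_right. auto.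
    apply Rle_ge, sumS_nonneg; auto. apply smb_scal; auto. }
  assert (Hv2 : smb (fun x => sumS enum (v x))).
  { apply smb_le with (fun x => 2 * sumS enum (b x)). intro x. rewrite Rabs_right. auto.
    apply Rle_ge, sumS_nonneg; auto. apply smb_scal; auto. }
  destruct (tonelliS u He Hu0 Hu1 Hu2) as [U1 [U2 U3]].
  destruct (tonelliS v He Hv0 Hv1 Hv2) as [V1 [V2 V3]].
  assert (Ea : forall x, sumS enum (a x) = (sumS enum (u x) - sumS enum (v x)) / 2).
  { intro x. rewrite <- sumS_minus by auto. 
    replace (sumS enum (a x)) with (sumS enum (fun y => /2 * (u x y - v x y))).
    rewrite sumS_scal. lra. apply smb_minus; auto. apply sumS_ext. intro y; unfold u, v; field. }
  assert (Ea' : forall y, sumS enum (fun x => a x y) = (sumS enum (fun x => u x y) - sumS enum (fun x => v x y)) / 2).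
  { intro y. rewrite <- sumS_minus by auto. 
    replace (sumS enum (fun x => a x y)) with (sumS enum (fun x => /2 * (u x y - v x y))).
    rewrite sumS_scal. lra. apply smb_minus; auto. apply sumS_ext. intro x; unfold u, v; field. }
  assert (Sa : smb (fun x => sumS enum (a x))).
  { eapply smb_ext. intro x. symmetry. apply Ea. unfold Rdiv.
    eapply smb_ext. intro x. rewrite Rmult_comm. reflexivity. apply smb_scal, smb_minus; auto. }
  split; auto. split; auto.
  rewrite (sumS_ext _ _ Ea'). rewrite (sumS_ext _ _ Ea).
  unfold Rdiv. rewrite (sumS_ext _ (fun y => /2 * (sumS enum (fun x => u x y) - sumS enum (fun x => v x y)))) by (intro; lra).
  rewrite (sumS_ext (fun x => _ * / 2) (fun x => /2 * (sumS enum (u x) - sumS enum (v x)))) by (intro; lra).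
  rewrite !sumS_scal by (apply smb_minus; auto).
  rewrite !sumS_minus by auto. rewrite U3, V3. auto.
Qed.

Lemma mctS (f : nat -> St -> R) (g : St -> R) C :
  (forall k x, 0 <= f k x) -> (forall k x, f k x <= f (S k) x) ->
  (forall x, Un_cv (fun k => f k x) (g x)) -> (forall k, smb (f k)) ->
  (forall k, sumS enum (f k) <= C) ->
  smb g /\ Un_cv (fun k => sumS enum (f k)) (sumS enum g).
Proof.
  intros H0 Hi Hc Hs HC.
  destruct (mct (fun k => F (f k)) (F g) C) as [M1 M2].
  - intros; unfold F; destruct (enum n); auto; lra.
  - intros; unfold F; destruct (enum n); auto; lra.
  - intros n; unfold F; destruct (enum n); auto. apply cv_const.
  - auto.
  - intro k; rewrite <- sumS_eq; auto.
  - split; auto. rewrite sumS_eq; auto. eapply Un_cv_ext; [|apply M2]. intro k; simpl. rewrite sumS_eq; auto.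
Qed.

Lemma fsumS (a : nat -> St -> R) K : (forall k, smb (a k)) ->
  smb (fun x => sum_f_R0 (fun k => a k x) K) /\
  sumS enum (fun x => sum_f_R0 (fun k => a k x) K) = sum_f_R0 (fun k => sumS enum (a k)) K.
Proof. intro H. induction K; simpl; auto.
  destruct IHK as [I1 I2]. split. apply smb_plus; auto. rewrite sumS_plus; auto. rewrite I2; auto. Qed.

End Sums.

Ltac pifs := unfold pif in *; repeat match goal with
  | |- context [excluded_middle_informative ?P] => destruct (excluded_middle_informative P)
  | H : context [excluded_middle_informative ?P] |- _ => destruct (excluded_middle_informative P)
  end.

Lemma pif_T {A} (P : Prop) (a b : A) : P -> pif P a b = a.
Proof. intro; unfold pif; destruct (excluded_middle_informative P); tauto. Qed.
Lemma pif_F {A} (P : Prop) (a b : A) : ~ P -> pif P a b = b.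
Proof. intro; unfold pif; destruct (excluded_middle_informative P); tauto. Qed.

Lemma set_ext {T} (A B : T -> Prop) : (forall x, A x <-> B x) -> A = B.
Proof. intro H. apply functional_extensionality; intro x. apply propositional_extensionality; auto. Qed.

Section Chain.
Variable St : Type.
Variable enum : nat -> option St.
Variable p : St -> St -> R.
Variable mu : St -> R.
Hypothesis Hch : chain_setting enum p mu.

Lemma He : is_enum St enum. Proof. apply Hch. Qed.
Lemma Hp0 : forall x y, 0 <= p x y. Proof. apply Hch. Qed.
Lemma Hp1 : forall x, smb St enum (p x) /\ sumS enum (p x) = 1.
Proof. intro x. destruct Hch as [_ [[_ H] _]]. specialize (H x).
  apply is_series_Reals in H. split. exists 1; exact H. rewrite sumS_eq. apply is_series_unique; auto.
  exists 1; exact H. Qed.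
Lemma Hmu0 : forall x, 0 <= mu x. Proof. apply Hch. Qed.
Lemma Hmu1 : smb St enum mu /\ sumS enum mu = 1.
Proof. destruct Hch as [_ [_ [_ [_ [[_ [H _]] _]]]]].
  apply is_series_Reals in H. split. exists 1; exact H. rewrite sumS_eq. apply is_series_unique; auto.
  exists 1; exact H. Qed.
Lemma Hrev : forall x y, mu x * p x y = mu y * p y x. Proof. apply Hch. Qed.
Lemma Hirr : forall x y, exists n, path_pos St p n x y. Proof. apply Hch. Qed.

Lemma p_le1 x y : p x y <= 1.
Proof. destruct (Hp1 x) as [H1 H2]. rewrite <- H2. apply term_le; auto using He, Hp0. Qed.

Lemma psmb x g c : (forall y, Rabs (g y) <= c) -> smb St enum (fun y => p x y * g y).
Proof. intro H. apply smb_le with (fun y => c * p x y). intro y. rewrite Rabs_mult, Rabs_right by (apply Rle_ge, Hp0).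
  rewrite Rmult_comm. apply Rmult_le_compat_r. apply Hp0. auto. apply smb_scal, Hp1. Qed.

Lemma psmb01 x g : (forall y, 0 <= g y <= 1) -> smb St enum (fun y => p x y * g y).
Proof. intro H. apply psmb with 1. intro y; specialize (H y). rewrite Rabs_right; lra. Qed.

Lemma psum01 x g : (forall y, 0 <= g y <= 1) -> 0 <= sumS enum (fun y => p x y * g y) <= 1.
Proof. intro H. split.
  apply sumS_nonneg. apply psmb01; auto. intro y. apply Rmult_le_pos. apply Hp0. apply H.
  destruct (Hp1 x) as [H1 H2]. rewrite <- H2. apply sumS_le. apply psmb01; auto. auto.
  intro y. specialize (H y). pose proof (Hp0 x y). nra. Qed.

Lemma hitn_S A B n x : hitn St enum p A B (S n) x =
  sumS enum (fun y => p x y * pif (B y) 0 (pif (A y) 1 (hitn St enum p A B n y))).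
Proof. reflexivity. Qed.

Lemma hitn01 A B n x : 0 <= hitn St enum p A B n x <= 1.
Proof. revert x; induction n; intro x; simpl. lra.
  apply psum01. intro y. pifs; try lra. auto. Qed.

Lemma hitn_inc A B n x : hitn St enum p A B n x <= hitn St enum p A B (S n) x.
Proof. revert x; induction n; intro x.
  - simpl hitn at 1. apply hitn01.
  - rewrite (hitn_S A B n x), (hitn_S A B (S n) x). apply sumS_le. apply psmb01. intro y; pifs; try lra; apply hitn01.
    apply psmb01. intro y; pifs; try lra; apply hitn01.
    intro y. apply Rmult_le_compat_l. apply Hp0. pifs; try lra. apply IHn. Qed.

Lemma hit_cv A B x : Un_cv (fun n => hitn St enum p A B n x) (hit enum p A B x).
Proof.
  destruct (growing_cv (fun n => hitn St enum p A B n x)) as [l Hl].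
  - intro n; apply hitn_inc.
  - exists 1. intros y [n ->]. apply hitn01.
  - unfold hit, lim. apply (epsilon_spec (inhabits 0) (fun l => Un_cv _ l)). exists l; auto.
Qed.

Lemma hitn_le_hit A B n x : hitn St enum p A B n x <= hit enum p A B x.
Proof. apply (growing_ineq (fun n => hitn St enum p A B n x)). intro; apply hitn_inc. apply hit_cv. Qed.

Lemma hit01 A B x : 0 <= hit enum p A B x <= 1.
Proof. split. eapply Rle_trans; [|apply (hitn_le_hit A B O)]. simpl; lra.
  apply Rle_cv_lim with (fun n => hitn St enum p A B n x) (fun _ => 1). intro; apply hitn01.
  apply hit_cv. apply cv_const. Qed.

Lemma cv_shift (u : nat -> R) l : Un_cv u l -> Un_cv (fun n => u (S n)) l.
Proof. intros H eps He. destruct (H eps He) as [N HN]. exists N. intros; apply HN; lia. Qed.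

Lemma hit_step A B x : hit enum p A B x =
  sumS enum (fun y => p x y * pif (B y) 0 (pif (A y) 1 (hit enum p A B y))).
Proof.
  destruct (mctS St enum (fun k y => p x y * pif (B y) 0 (pif (A y) 1 (hitn St enum p A B k y)))
     (fun y => p x y * pif (B y) 0 (pif (A y) 1 (hit enum p A B y))) 1) as [M1 M2].
  - intros; apply Rmult_le_pos. apply Hp0. pifs; try lra; apply hitn01.
  - intros; apply Rmult_le_compat_l. apply Hp0. pifs; try lra; apply hitn_inc.
  - intro y. apply CV_mult. apply cv_const. pifs; try apply cv_const. apply hit_cv.
  - intro k. apply psmb01. intro y; pifs; try lra; apply hitn01.
  - intro k. apply psum01. intro y; pifs; try lra; apply hitn01.
  - apply UL_sequence with (fun k => hitn St enum p A B (S k) x). apply (cv_shift (fun n => hitn St enum p A B n x)), hit_cv.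
    exact M2.
Qed.

Lemma hit_ge_step A B x y : 0 < p x y -> ~ B y -> (A y \/ 0 < hit enum p A B y) -> 0 < hit enum p A B x.
Proof. intros Hp HB HA. rewrite hit_step.
  eapply Rlt_le_trans; [|apply (term_le St enum _ y He)].
  cbv beta. rewrite pif_F by auto. apply Rmult_lt_0_compat; auto. pifs; try lra. destruct HA; tauto.
  apply psmb01. intro z; pifs; try lra; apply hit01.
  intro z. apply Rmult_le_pos. apply Hp0. pifs; try lra; apply hit01. Qed.


Lemma inv_smb y : smb St enum (fun x => mu x * p x y).
Proof. apply smb_le with mu. intro x. rewrite Rabs_right. pose proof (Hmu0 x); pose proof (p_le1 x y); pose proof (Hp0 x y); nra.
  pose proof (Hmu0 x); pose proof (Hp0 x y); apply Rle_ge; nra. apply Hmu1. Qed.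

Lemma inv y : sumS enum (fun x => mu x * p x y) = mu y.
Proof. destruct Hch as [_ [_ [_ [_ [[_ [_ H] ] _]]]]]. apply H. Qed.

Lemma mu_pos x : 0 < mu x.
Proof.
  assert (H0 : exists x0, 0 < mu x0).
  { apply NNPP. intro H. assert (forall x, mu x = 0).
    { intro z. pose proof (Hmu0 z). destruct (Rle_lt_or_eq_dec 0 (mu z) H0); auto. exfalso; apply H; eauto. }
    destruct Hmu1 as [_ E]. rewrite (sumS_ext St enum mu (fun _ => 0)) in E by auto. rewrite sumS_0 in E. lra. }
  destruct H0 as [x0 Hx0]. destruct (Hirr x0 x) as [n Hn]. revert x0 Hx0 Hn. induction n; intros x0 Hx0 Hn; simpl in Hn.
  - subst; auto.
  - destruct Hn as [z [Hz Hn]]. apply (IHn z); auto.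
    rewrite <- inv. eapply Rlt_le_trans; [|apply (term_le St enum _ x0 He)]. apply Rmult_lt_0_compat; auto.
    apply inv_smb. intro; apply Rmult_le_pos; [apply Hmu0|apply Hp0].
Qed.

Lemma muP g : (forall y, 0 <= g y <= 1) ->
  smb St enum (fun x => mu x * sumS enum (fun y => p x y * g y)) /\
  sumS enum (fun x => mu x * sumS enum (fun y => p x y * g y)) = sumS enum (fun y => mu y * g y).
Proof.
  intro Hg.
  set (a := fun x y => mu x * p x y * g y).
  assert (Ha0 : forall x y, 0 <= a x y). { intros; unfold a. pose proof (Hmu0 x); pose proof (Hp0 x y); specialize (Hg y). 
    apply Rmult_le_pos; [nra|lra]. }
  assert (Ha1 : forall x, smb St enum (a x)). { intro x. unfold a. eapply smb_ext; [|apply (smb_scal St enum (mu x)), (psmb01 x g); auto].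
    intro y; unfold a; simpl. ring. }
  assert (Hsa : forall x, sumS enum (a x) = mu x * sumS enum (fun y => p x y * g y)).
  { intro x. rewrite <- sumS_scal by (apply psmb01; auto). apply sumS_ext. intro; unfold a; ring. }
  assert (Ha2 : smb St enum (fun x => sumS enum (a x))).
  { apply smb_le with mu. intro x. rewrite Hsa. pose proof (psum01 x g Hg). pose proof (Hmu0 x).
    rewrite Rabs_right by (apply Rle_ge; nra). nra. apply Hmu1. }
  destruct (tonelliS St enum a He Ha0 Ha1 Ha2) as [T1 [T2 T3]].
  split. eapply smb_ext; [|apply Ha2]. apply Hsa.
  rewrite <- (sumS_ext St enum _ _ Hsa). rewrite <- T3. apply sumS_ext. intro y.
  rewrite <- inv. rewrite Rmult_comm, <- sumS_scal by apply inv_smb. apply sumS_ext; intro; unfold a; ring.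
Qed.

Lemma sq01 a b : 0 <= a <= 1 -> 0 <= b <= 1 -> 0 <= (a - b) * (a - b) <= 1.
Proof. intros. pose proof (Rle_0_sqr (a - b)); unfold Rsqr in *. split. lra. assert (0 <= (1 - (a - b)) * (1 + (a - b))) by (apply Rmult_le_pos; lra). nra. Qed.

Lemma harm_const g : (forall y, 0 <= g y <= 1) -> (forall x, g x = sumS enum (fun y => p x y * g y)) ->
  forall x y, g x = g y.
Proof.
  intros Hg Hh.
  set (d := fun x => sumS enum (fun y => p x y * ((g x - g y) * (g x - g y)))).
  assert (Hd0 : forall x, smb St enum (fun y => p x y * ((g x - g y) * (g x - g y)))).
  { intro x. apply psmb01. intro y; apply sq01; auto. }
  assert (Hg2 : forall y, 0 <= g y * g y <= 1). { intro y; pose proof (Hg y); split; nra. }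
  assert (Hd : forall x, d x = sumS enum (fun y => p x y * (g y * g y)) - g x * g x).
  { intro x. unfold d.
    rewrite (sumS_ext St enum _ (fun y => (g x * g x * p x y + p x y * (g y * g y)) - (2 * g x) * (p x y * g y))) by (intro; ring).
    rewrite sumS_minus, sumS_plus, sumS_scal, sumS_scal, (proj2 (Hp1 x)), <- Hh. ring.
    all: try (apply psmb01; auto). apply Hp1. apply smb_scal, Hp1. apply smb_plus. apply smb_scal, Hp1. apply psmb01; auto.
    apply smb_scal, psmb01; auto. }
  assert (Hdb : forall x, 0 <= d x <= 1).
  { intro x. apply psum01. intro y; apply sq01; auto. }
  assert (Hmd : sumS enum (fun x => mu x * d x) = 0).
  { rewrite (sumS_ext St enum _ (fun x => mu x * sumS enum (fun y => p x y * (g y * g y)) - mu x * (g x * g x))) by (intro; rewrite Hd; ring).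
    rewrite sumS_minus. rewrite (proj2 (muP _ Hg2)). lra. apply (proj1 (muP _ Hg2)).
    apply smb_le with mu. intro x. pose proof (Hmu0 x); pose proof (Hg2 x). rewrite Rabs_right; nra. apply Hmu1. }
  assert (Hmds : smb St enum (fun x => mu x * d x)).
  { apply smb_le with mu. intro x. pose proof (Hmu0 x); pose proof (Hdb x). rewrite Rabs_right; nra. apply Hmu1. }
  assert (Hdz : forall x, d x = 0).
  { intro x. pose proof (sumS_zero_inv St enum _ x He Hmds) as H.
    assert (mu x * d x = 0). apply H; auto. intro z; pose proof (Hmu0 z); pose proof (Hdb z); nra.
    pose proof (mu_pos x). destruct (Rmult_integral _ _ H0); lra. }
  assert (Hedge : forall x y, 0 < p x y -> g x = g y).
  { intros x y Hxy. pose proof (sumS_zero_inv St enum _ y He (Hd0 x)) as H.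
    assert (p x y * ((g x - g y) * (g x - g y)) = 0). apply H. intro z. apply Rmult_le_pos. apply Hp0. apply (sq01 (g x) (g z)); auto. apply Hdz.
    destruct (Rmult_integral _ _ H0). lra. destruct (Rmult_integral _ _ H1); lra. }
  intros x y. destruct (Hirr x y) as [n Hn]. revert x Hn. induction n; intros x Hn; simpl in Hn.
  subst; auto. destruct Hn as [z [Hz Hn]]. rewrite (Hedge x z Hz). auto.
Qed.

Lemma rec T : (exists t, T t) -> forall x, hit enum p T (fun _ => False) x = 1.
Proof.
  intros [t Ht].
  set (f := fun x => 1 - hit enum p T (fun _ => False) x).
  assert (Hf : forall y, 0 <= f y <= 1). { intro y; unfold f; pose proof (hit01 T (fun _ => False) y); lra. }
  assert (Hg : forall y, 0 <= pif (T y) 0 (f y) <= 1). { intro y; pifs; try lra; auto. }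
  assert (Hstep : forall x, f x = sumS enum (fun y => p x y * pif (T y) 0 (f y))).
  { intro x. unfold f at 1. rewrite hit_step. rewrite <- (proj2 (Hp1 x)) at 1. rewrite <- sumS_minus.
    apply sumS_ext. intro y. unfold f; pifs; try tauto; try ring; match goal with |- ?G => idtac G; fail end. apply Hp1.
    apply psmb01. intro y; pifs; try lra; apply hit01. }
  assert (S1 : sumS enum (fun x => mu x * f x) = sumS enum (fun y => mu y * pif (T y) 0 (f y))).
  { rewrite <- (proj2 (muP _ Hg)). apply sumS_ext. intro x. rewrite <- Hstep; auto. }
  assert (Hs1 : smb St enum (fun x => mu x * f x)).
  { apply smb_le with mu. intro x. pose proof (Hmu0 x); pose proof (Hf x). rewrite Rabs_right; nra. apply Hmu1. }
  assert (Hs2 : smb St enum (fun x => mu x * pif (T x) 0 (f x))).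
  { apply smb_le with mu. intro x. pose proof (Hmu0 x); pose proof (Hg x). rewrite Rabs_right; nra. apply Hmu1. }
  assert (HT : forall y, T y -> f y = 0).
  { intros y Hy. assert (E : sumS enum (fun x => mu x * f x - mu x * pif (T x) 0 (f x)) = 0).
    rewrite sumS_minus; auto. lra.
    pose proof (sumS_zero_inv St enum _ y He (smb_minus St enum _ _ Hs1 Hs2)) as H. cbv beta in H.
    rewrite pif_T in H by auto. assert (mu y * f y - mu y * 0 = 0). apply H; auto.
    intro z. pose proof (Hmu0 z); pose proof (Hf z). pifs; nra.
    pose proof (mu_pos y). assert (mu y * f y = 0) by lra. destruct (Rmult_integral _ _ H2); lra. }
  assert (Hharm : forall x, f x = sumS enum (fun y => p x y * f y)).
  { intro x. rewrite Hstep. apply sumS_ext. intro y. pifs; auto. rewrite HT; auto. }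
  intro x. pose proof (harm_const f Hf Hharm x t). rewrite (HT t Ht) in H. unfold f in H. lra.
Qed.


Lemma hitn_add A B C n x : (forall z, A z -> B z -> False) -> (forall z, A z -> C z -> False) ->
  (forall z, B z -> C z -> False) ->
  hitn St enum p A (fun z => B z \/ C z) n x + hitn St enum p B (fun z => A z \/ C z) n x =
  hitn St enum p (fun z => A z \/ B z) C n x.
Proof. intros HAB HAC HBC. revert x; induction n; intro x. simpl; lra.
  rewrite !hitn_S. rewrite <- sumS_plus. apply sumS_ext. intro y. rewrite <- IHn.
  pifs; try tauto; try ring; exfalso; firstorder.
  apply psmb01. intro; pifs; try lra; apply hitn01. apply psmb01. intro; pifs; try lra; apply hitn01. Qed.

Lemma hit_add A B C x : (forall z, A z -> B z -> False) -> (forall z, A z -> C z -> False) ->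
  (forall z, B z -> C z -> False) ->
  hit enum p A (fun z => B z \/ C z) x + hit enum p B (fun z => A z \/ C z) x =
  hit enum p (fun z => A z \/ B z) C x.
Proof. intros. apply UL_sequence with (fun n => hitn St enum p (fun z => A z \/ B z) C n x).
  eapply Un_cv_ext. intro n. apply hitn_add; auto. apply CV_plus; apply hit_cv. apply hit_cv. Qed.

Lemma hit_compl A B x : (forall z, A z -> B z -> False) -> (exists t, A t \/ B t) ->
  hit enum p A B x + hit enum p B A x = 1.
Proof. intros HAB Hne. pose proof (hit_add A B (fun _ => False) x HAB (fun _ _ H => H) (fun _ _ H => H)).
  cbv beta in H. rewrite (set_ext (fun z => B z \/ False) B) in H by tauto.
  rewrite (set_ext (fun z => A z \/ False) A) in H by tauto.
  rewrite H. apply rec. auto. Qed.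

(* taboo kernels *)
Fixpoint G (T : St -> Prop) (n : nat) (x y : St) : R :=
  match n with O => p x y | S n => sumS enum (fun z => p x z * pif (T z) 0 (G T n z y)) end.

Lemma G01 T n x y : 0 <= G T n x y <= 1.
Proof. revert x; induction n; intro x; simpl. split; [apply Hp0|apply p_le1].
  apply psum01. intro; pifs; try lra; auto. Qed.

Lemma Gsum T n x : smb St enum (fun y => G T n x y) /\ sumS enum (fun y => G T n x y) <= 1.
Proof. revert x; induction n; intro x.
  - simpl. split. apply Hp1. change (sumS enum (p x) <= 1). rewrite (proj2 (Hp1 x)); lra.
  - set (a := fun z y => p x z * pif (T z) 0 (G T n z y)).
    assert (Ha0 : forall z y, 0 <= a z y). { intros; unfold a; apply Rmult_le_pos. apply Hp0. pifs; try lra; apply G01. }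
    assert (Hsa : forall z, smb St enum (a z) /\ sumS enum (a z) = p x z * pif (T z) 0 (sumS enum (fun y => G T n z y))).
    { intro z. unfold a. destruct (excluded_middle_informative (T z)).
      + rewrite pif_T by auto. split. eapply smb_ext; [|apply smb_0]. intro; rewrite pif_T; auto; ring.
        rewrite (sumS_ext St enum _ (fun _ => 0)). rewrite sumS_0; ring. intro; rewrite pif_T; auto; ring.
      + rewrite pif_F by auto. split. eapply smb_ext; [|apply (smb_scal St enum (p x z)), IHn]. intro; rewrite pif_F; auto.
        rewrite <- sumS_scal by apply IHn. apply sumS_ext. intro; rewrite pif_F; auto. }
    assert (Hb : smb St enum (fun z => sumS enum (a z))).
    { eapply smb_ext. intro z. symmetry. apply Hsa. apply psmb01. intro z. pifs. lra. split. apply sumS_nonneg.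
      apply IHn. intro; apply G01. apply IHn. }
    destruct (tonelliS St enum a He Ha0 (fun z => proj1 (Hsa z)) Hb) as [T1 [T2 T3]].
    split. apply T2. change (sumS enum (fun y => sumS enum (fun z => a z y)) <= 1). rewrite T3. rewrite (sumS_ext St enum _ _ (fun z => proj2 (Hsa z))).
    apply psum01. intro z. pifs. lra. split. apply sumS_nonneg. apply IHn. intro; apply G01. apply IHn.
Qed.

Lemma Glast T n x y : G T (S n) x y = sumS enum (fun z => G T n x z * pif (T z) 0 (p z y)).
Proof.
  revert x y; induction n; intros x y. reflexivity.
  change (G T (S (S n)) x y) with (sumS enum (fun z => p x z * pif (T z) 0 (G T (S n) z y))).
  rewrite (sumS_ext St enum _ (fun z => p x z * pif (T z) 0 (sumS enum (fun w => G T n z w * pif (T w) 0 (p w y)))))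
    by (intro z; rewrite IHn; auto).
  set (a := fun z w => p x z * pif (T z) 0 (G T n z w * pif (T w) 0 (p w y))).
  assert (Ha0 : forall z w, 0 <= a z w). { intros; unfold a. apply Rmult_le_pos; [apply Hp0|]. pifs; try lra. apply Rmult_le_pos; [apply G01|apply Hp0]. }
  assert (Hc : forall z, smb St enum (fun w => G T n z w * pif (T w) 0 (p w y))).
  { intro z. apply smb_le with (fun w => G T n z w). intro w. pose proof (G01 T n z w). pose proof (Hp0 w y). pose proof (p_le1 w y).
    rewrite Rabs_right; pifs; nra. apply Gsum. }
  assert (Hcb : forall z, 0 <= sumS enum (fun w => G T n z w * pif (T w) 0 (p w y)) <= 1).
  { intro z. split. apply sumS_nonneg; auto. intro w. pose proof (G01 T n z w). pose proof (Hp0 w y). pifs; nra.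
    eapply Rle_trans; [|apply (proj2 (Gsum T n z))]. apply sumS_le; auto. apply Gsum.
    intro w. pose proof (G01 T n z w). pose proof (Hp0 w y). pose proof (p_le1 w y). pifs; nra. }
  assert (Hsa : forall z, smb St enum (a z) /\ sumS enum (a z) = p x z * pif (T z) 0 (sumS enum (fun w => G T n z w * pif (T w) 0 (p w y)))).
  { intro z. unfold a. destruct (excluded_middle_informative (T z)).
    + rewrite pif_T by auto. split. eapply smb_ext; [|apply smb_0]. intro; rewrite pif_T; auto; ring.
      rewrite (sumS_ext St enum _ (fun _ => 0)). rewrite sumS_0; ring. intro; rewrite pif_T; auto; ring.
    + rewrite pif_F by auto. split. eapply smb_ext; [|apply (smb_scal St enum (p x z)), Hc]. intro; rewrite pif_F; auto.
      rewrite <- sumS_scal by apply Hc. apply sumS_ext. intro; rewrite pif_F; auto. }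
  assert (Hb : smb St enum (fun z => sumS enum (a z))).
  { eapply smb_ext. intro z. symmetry. apply Hsa. apply psmb01. intro z. pifs. lra. auto. }
  destruct (tonelliS St enum a He Ha0 (fun z => proj1 (Hsa z)) Hb) as [T1 [T2 T3]].
  rewrite <- (sumS_ext St enum _ _ (fun z => proj2 (Hsa z))). rewrite <- T3. apply sumS_ext. intro w.
  simpl. rewrite Rmult_comm, <- sumS_scal. apply sumS_ext. intro z. unfold a. pifs; ring.
  apply psmb01. intro; pifs; try lra; apply G01.
Qed.

Lemma Grev T n x y : mu x * G T n x y = mu y * G T n y x.
Proof. revert x y; induction n; intros x y. apply Hrev.
  rewrite (Glast T n y x).
  change (mu x * sumS enum (fun z => p x z * pif (T z) 0 (G T n z y)) =
          mu y * sumS enum (fun z => G T n y z * pif (T z) 0 (p z x))).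
  rewrite <- !sumS_scal. apply sumS_ext. intro z. destruct (excluded_middle_informative (T z)).
  rewrite !pif_T by auto; ring. rewrite !pif_F by auto.
  transitivity ((mu x * p x z) * G T n z y). ring. rewrite Hrev.
  transitivity (p z x * (mu z * G T n z y)). ring. rewrite IHn. ring.
  apply smb_le with (fun w => G T n y w). intro w. pose proof (G01 T n y w). pose proof (Hp0 w x). pose proof (p_le1 w x).
    rewrite Rabs_right; pifs; nra. apply Gsum.
  apply psmb01. intro; pifs; try lra; apply G01.
Qed.


Definition Hyn (V : St -> Prop) y n x := hitn St enum p (fun z => z = y) (fun z => V z /\ z <> y) n x.
Definition Hy (V : St -> Prop) y x := hit enum p (fun z => z = y) (fun z => V z /\ z <> y) x.

Fixpoint Gs (V : St -> Prop) n x y : R := match n with O => 0 | S n => Gs V n x y + G V n x y end.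

Lemma Gs_b V n x y : 0 <= Gs V n x y <= INR n.
Proof. induction n. simpl; lra. change (Gs V (S n) x y) with (Gs V n x y + G V n x y). pose proof (G01 V n x y). rewrite S_INR. lra. Qed.

Lemma Gs_rec V n x y : Gs V (S n) x y = p x y + sumS enum (fun z => p x z * pif (V z) 0 (Gs V n z y)).
Proof. induction n.
  - simpl. rewrite (sumS_ext St enum _ (fun _ => 0)). rewrite sumS_0; ring. intro; pifs; ring.
  - change (Gs V (S (S n)) x y) with (Gs V (S n) x y + G V (S n) x y). rewrite IHn.
    change (G V (S n) x y) with (sumS enum (fun z => p x z * pif (V z) 0 (G V n z y))).
    rewrite Rplus_assoc, <- sumS_plus. f_equal. apply sumS_ext. intro z; simpl; pifs; ring.
    apply psmb with (INR n). intro z; pifs. rewrite Rabs_R0. apply pos_INR. pose proof (Gs_b V n z y). rewrite Rabs_right; lra.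
    apply psmb01. intro z; pifs; try lra; apply G01.
Qed.

Lemma hitn_Gs V y n x : V y -> Hyn V y n x = Gs V n x y.
Proof. intro Vy. unfold Hyn. revert x; induction n; intro x. reflexivity.
  rewrite hitn_S, Gs_rec.
  rewrite (sumS_ext St enum _ (fun z => pif (z = y) (p x z) 0 + p x z * pif (V z) 0 (hitn St enum p (fun z => z = y) (fun z => V z /\ z <> y) n z))).
  rewrite sumS_plus. rewrite (proj2 (sumS_single St enum (p x) y He)). f_equal. apply sumS_ext. intro z. rewrite IHn; auto.
  apply (sumS_single St enum (p x) y He). apply psmb01. intro; pifs; try lra; apply hitn01.
  intro z. pifs; subst; try tauto; try ring.
Qed.

Lemma Gs_sym V n x y : mu x * Gs V n x y = mu y * Gs V n y x.
Proof. induction n; simpl. ring. rewrite !Rmult_plus_distr_l, IHn, Grev. auto. Qed.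

Lemma Hy_cv V y x : Un_cv (fun n => Hyn V y n x) (Hy V y x).
Proof. apply hit_cv. Qed.

Lemma Hy01 V y x : 0 <= Hy V y x <= 1.
Proof. apply hit01. Qed.

Lemma Hy_sym V x y : V x -> V y -> mu x * Hy V y x = mu y * Hy V x y.
Proof. intros Vx Vy. apply UL_sequence with (fun n => mu x * Hyn V y n x).
  apply CV_mult. apply cv_const. apply Hy_cv.
  apply Un_cv_ext with (fun n => mu y * Hyn V x n y).
  intro n. rewrite !hitn_Gs by auto. symmetry. apply Gs_sym.
  apply CV_mult. apply cv_const. apply Hy_cv.
Qed.


Definition Rn V (phi : St -> R) n x := sumS enum (fun y => pif (V y) (Hyn V y n x * phi y) 0).

Lemma Hyn01 V y n x : 0 <= Hyn V y n x <= 1.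
Proof. apply hitn01. Qed.

Lemma Rn_rec_aux V phi n : (forall y, 0 <= phi y <= 1) ->
  (forall x, smb St enum (fun y => pif (V y) (Hyn V y n x * phi y) 0) /\ 0 <= Rn V phi n x <= 1) ->
  forall x, smb St enum (fun y => pif (V y) (Hyn V y (S n) x * phi y) 0) /\
    Rn V phi (S n) x = sumS enum (fun z => p x z * pif (V z) (phi z) (Rn V phi n z)).
Proof.
  intros Hphi Hc x.
  set (c := fun z y => pif (V z /\ z <> y) 0 (pif (z = y) 1 (Hyn V y n z))).
  assert (Hc01 : forall z y, 0 <= c z y <= 1). { intros; unfold c; pifs; try lra; apply Hyn01. }
  set (a := fun z y => p x z * pif (V y) (c z y * phi y) 0).
  assert (Ha0 : forall z y, 0 <= a z y).
  { intros; unfold a. apply Rmult_le_pos. apply Hp0. pifs; try lra. apply Rmult_le_pos; [apply Hc01|apply Hphi]. }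
  assert (Hsa : forall z, smb St enum (a z) /\ sumS enum (a z) = p x z * pif (V z) (phi z) (Rn V phi n z)).
  { intro z. destruct (excluded_middle_informative (V z)) as [Vz|Vz].
    - rewrite pif_T by auto.
      assert (E : forall y, a z y = pif (y = z) ((fun _ => p x z * phi z) y) 0).
      { intro y. unfold a, c. pifs; subst; try tauto; try ring. }
      split. eapply smb_ext; [|apply (sumS_single St enum (fun _ => p x z * phi z) z He)]. intro; rewrite E; auto.
      rewrite (sumS_ext St enum _ _ E). apply (sumS_single St enum (fun _ => p x z * phi z) z He).
    - rewrite pif_F by auto.
      assert (E : forall y, a z y = p x z * pif (V y) (Hyn V y n z * phi y) 0).
      { intro y. unfold a, c. pifs; subst; try tauto; try ring. }
      split. eapply smb_ext; [|apply (smb_scal St enum (p x z)), (proj1 (Hc z))]. intro; rewrite E; auto.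
      rewrite (sumS_ext St enum _ _ E). apply sumS_scal. apply Hc. }
  assert (Hb : smb St enum (fun z => sumS enum (a z))).
  { eapply smb_ext. intro z. symmetry. apply Hsa. apply psmb01. intro z. pifs. auto. apply Hc. }
  destruct (tonelliS St enum a He Ha0 (fun z => proj1 (Hsa z)) Hb) as [T1 [T2 T3]].
  assert (Hrel : forall y, pif (V y) (Hyn V y (S n) x * phi y) 0 = sumS enum (fun z => a z y)).
  { intro y. unfold Hyn. rewrite hitn_S. destruct (excluded_middle_informative (V y)).
    - rewrite pif_T by auto. rewrite Rmult_comm, <- sumS_scal. apply sumS_ext. intro z. unfold a, c, Hyn.
      rewrite (pif_T (V y)) by auto. ring. apply psmb01. intro z; pifs; try lra; apply hitn01.
    - rewrite pif_F by auto. rewrite (sumS_ext St enum _ (fun _ => 0)). symmetry; apply sumS_0.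
      intro z. unfold a. rewrite pif_F by auto. ring. }
  split. eapply smb_ext; [|apply T2]. intro y; rewrite Hrel; auto.
  unfold Rn at 1. rewrite (sumS_ext St enum _ _ Hrel). rewrite T3. apply sumS_ext. intro z. apply Hsa.
Qed.

Lemma Rn_claim V phi n : (forall y, 0 <= phi y <= 1) ->
  forall x, smb St enum (fun y => pif (V y) (Hyn V y n x * phi y) 0) /\ 0 <= Rn V phi n x <= 1.
Proof. intros Hphi. induction n; intro x.
  - assert (E : forall y, pif (V y) (Hyn V y 0 x * phi y) 0 = 0). { intro y; unfold Hyn; simpl; pifs; ring. }
    split. eapply smb_ext; [|apply smb_0]. intro; rewrite E; auto.
    unfold Rn. rewrite (sumS_ext St enum _ _ E), sumS_0. lra.
  - destruct (Rn_rec_aux V phi n Hphi IHn x) as [H1 H2]. split; auto. rewrite H2. apply psum01.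
    intro z. pifs; auto. apply IHn.
Qed.

Lemma Rn_rec V phi n x : (forall y, 0 <= phi y <= 1) ->
  Rn V phi (S n) x = sumS enum (fun z => p x z * pif (V z) (phi z) (Rn V phi n z)).
Proof. intro Hphi. apply (Rn_rec_aux V phi n Hphi (Rn_claim V phi n Hphi)). Qed.

Lemma Rlim V phi x : (forall y, 0 <= phi y <= 1) ->
  smb St enum (fun y => pif (V y) (Hy V y x * phi y) 0) /\
  Un_cv (fun n => Rn V phi n x) (sumS enum (fun y => pif (V y) (Hy V y x * phi y) 0)).
Proof. intro Hphi.
  apply (mctS St enum (fun k y => pif (V y) (Hyn V y k x * phi y) 0) _ 1).
  - intros; pifs; try lra. apply Rmult_le_pos; [apply Hyn01|apply Hphi].
  - intros; pifs; try lra. apply Rmult_le_compat_r. apply Hphi. apply hitn_inc.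
  - intro y. pifs. apply CV_mult. apply Hy_cv. apply cv_const. apply cv_const.
  - intro k. apply Rn_claim; auto.
  - intro k. apply Rn_claim; auto.
Qed.

Lemma h01 A B y : 0 <= h enum p A B y <= 1.
Proof. unfold h. pifs; try lra. apply hit01. Qed.

Lemma SM V A B x : (forall z, A z -> B z -> False) -> (forall z, A z -> V z) -> (forall z, B z -> V z) ->
  smb St enum (fun y => pif (V y) (Hy V y x * h enum p A B y) 0) /\
  hit enum p A B x = sumS enum (fun y => pif (V y) (Hy V y x * h enum p A B y) 0).
Proof.
  intros HAB HAV HBV.
  set (phi := h enum p A B). assert (Hphi : forall y, 0 <= phi y <= 1) by apply h01.
  destruct (Rlim V phi x Hphi) as [L1 L2]. split; auto.
  assert (I1 : forall n x, hitn St enum p A B n x <= Rn V phi n x).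
  { induction n; intro z. simpl. apply Rn_claim; auto.
    rewrite hitn_S, Rn_rec by auto. apply sumS_le.
    apply psmb01. intro; pifs; try lra; apply hitn01.
    apply psmb01. intro; pifs; auto; apply Rn_claim; auto.
    intro y. apply Rmult_le_compat_l. apply Hp0. unfold phi, h.
    pifs; try lra; try (exfalso; eauto; fail); first [apply hitn_le_hit | apply IHn | apply hitn01]. }
  assert (I2 : forall n x, Rn V phi n x <= hit enum p A B x).
  { induction n; intro z.
    - unfold Rn. rewrite (sumS_ext St enum _ (fun _ => 0)). rewrite sumS_0. apply hit01.
      intro y; unfold Hyn; simpl; pifs; ring.
    - rewrite Rn_rec by auto. rewrite (hit_step A B z). apply sumS_le.
      apply psmb01. intro; pifs; auto; apply Rn_claim; auto.
      apply psmb01. intro; pifs; try lra; apply hit01.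
      intro y. apply Rmult_le_compat_l. apply Hp0. unfold phi, h.
      pifs; try lra; try (exfalso; eauto; fail); first [apply IHn | apply hit01 | apply Rn_claim; auto]. }
  apply Rle_antisym.
  - apply Rle_cv_lim with (fun n => hitn St enum p A B n x) (fun n => Rn V phi n x); auto. apply hit_cv.
  - apply Rle_cv_lim with (fun n => Rn V phi n x) (fun _ => hit enum p A B x); auto. apply cv_const.
Qed.


Definition Emp : St -> Prop := fun _ => False.

Lemma HySum V x : smb St enum (fun y => pif (V y) (Hy V y x) 0) /\
  sumS enum (fun y => pif (V y) (Hy V y x) 0) = hit enum p V Emp x.
Proof.
  destruct (SM V V Emp x) as [S1 S2]; [intros ? ? H; destruct H | auto | intros ? H; destruct H |].
  assert (E : forall y, pif (V y) (Hy V y x * h enum p V Emp y) 0 = pif (V y) (Hy V y x) 0).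
  { intro y. unfold h. pifs; try tauto; ring. }
  split. eapply smb_ext; [|apply S1]. auto. rewrite S2. apply sumS_ext. auto.
Qed.

Lemma smb_mub f : (forall x, Rabs (f x) <= mu x) -> smb St enum f.
Proof. intro H. apply smb_le with mu; auto. apply Hmu1. Qed.

Lemma smb_Hy V W x g : (forall y, W y -> V y) -> (forall y, Rabs (g y) <= 1) ->
  smb St enum (fun y => pif (W y) (Hy V y x * g y) 0).
Proof. intros HW Hg. apply smb_le with (fun y => pif (V y) (Hy V y x) 0). 2: apply HySum.
  intro y. specialize (Hg y). pose proof (Hy01 V y x). pifs; try (exfalso; auto; fail).
  rewrite Rabs_mult, (Rabs_right (Hy V y x)) by lra. nra. rewrite Rabs_R0; lra. rewrite Rabs_R0; lra. Qed.

Lemma sum_Hy_bound V W x g : (forall y, W y -> V y) -> (forall y, Rabs (g y) <= 1) ->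
  Rabs (sumS enum (fun y => pif (W y) (Hy V y x * g y) 0)) <= 1.
Proof. intros HW Hg. apply Rabs_le. 
  assert (Hb : sumS enum (fun y => pif (V y) (Hy V y x) 0) <= 1). { rewrite (proj2 (HySum V x)). apply hit01. }
  assert (Hs := smb_Hy V W x g HW Hg).
  split.
  -     assert (- sumS enum (fun y => pif (V y) (Hy V y x) 0) <= sumS enum (fun y => pif (W y) (Hy V y x * g y) 0)).
    { replace (- sumS enum (fun y => pif (V y) (Hy V y x) 0)) with (sumS enum (fun y => -1 * pif (V y) (Hy V y x) 0)) by (rewrite sumS_scal by apply HySum; ring).
      apply sumS_le; auto. apply smb_scal, HySum. intro y. specialize (Hg y); apply Rabs_le_between in Hg.
      pose proof (Hy01 V y x). specialize (HW y). pifs; try tauto; nra. }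
    lra.
  - eapply Rle_trans; [|apply Hb]. apply sumS_le; auto. apply HySum. intro y. specialize (Hg y); apply Rabs_le_between in Hg.
      pose proof (Hy01 V y x). specialize (HW y). pifs; try tauto; nra.
Qed.

Lemma Green V W phi : (forall z, W z -> V z) -> (forall y, 0 <= phi y <= 1) ->
  sumS enum (fun x => pif (W x) (mu x * sumS enum (fun y => pif (W y) (Hy V y x * (phi x - phi y)) 0)) 0) = 0.
Proof.
  intros HWV Hphi.
  assert (Hd : forall x y, Rabs (phi x - phi y) <= 1).
  { intros. pose proof (Hphi x); pose proof (Hphi y). apply Rabs_le; lra. }
  set (a := fun x y => pif (W x) (pif (W y) (mu x * Hy V y x * (phi x - phi y)) 0) 0).
  set (b := fun x y => mu x * pif (V y) (Hy V y x) 0).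
  assert (Hab : forall x y, Rabs (a x y) <= b x y).
  { intros x y. unfold a, b. pose proof (Hmu0 x). pose proof (Hy01 V y x). specialize (Hd x y). specialize (HWV y).
    pifs; try tauto; rewrite ?Rabs_R0; try nra.
    rewrite Rabs_mult, (Rabs_right (mu x * Hy V y x)) by nra. rewrite <- (Rmult_1_r (mu x * Hy V y x)) at 2. apply Rmult_le_compat_l; nra. }
  assert (Hb1 : forall x, smb St enum (b x)). { intro x. apply smb_scal, HySum. }
  assert (Hb2 : smb St enum (fun x => sumS enum (b x))).
  { apply smb_mub. intro x. unfold b. rewrite sumS_scal by apply HySum. rewrite (proj2 (HySum V x)).
    pose proof (Hmu0 x); pose proof (hit01 V Emp x). rewrite Rabs_right; nra. }
  destruct (fubiniS St enum a b He Hab Hb1 Hb2) as [F1 [F2 F3]].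
  assert (Anti : forall x y, a y x = - a x y).
  { intros x y. unfold a. pifs; try ring. rewrite (Rmult_comm (mu y)), Hy_sym by auto. ring. }
  assert (E : sumS enum (fun y => sumS enum (fun x => a x y)) = - sumS enum (fun x => sumS enum (a x))).
  { rewrite (sumS_ext St enum _ (fun y => -1 * sumS enum (a y))). rewrite sumS_scal by auto. ring.
    intro y. rewrite <- sumS_scal by auto. apply sumS_ext. intro x. rewrite Anti. ring. }
  rewrite F3 in E.
  assert (Z : sumS enum (fun x => sumS enum (a x)) = 0) by lra.
  rewrite <- Z at 1. apply sumS_ext. intro x. unfold a. destruct (excluded_middle_informative (W x)).
  - rewrite pif_T by auto. rewrite <- sumS_scal. apply sumS_ext. intro y. pifs; try tauto; ring.
    apply smb_Hy; auto.
  - rewrite pif_F by auto. rewrite (sumS_ext St enum _ (fun _ => 0)). symmetry; apply sumS_0. intro; rewrite pif_F; auto.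
Qed.


Lemma hit_pos_path A B : (forall z, A z -> B z -> False) -> forall n z b, B b -> path_pos St p (S n) z b ->
  (exists x, A x /\ 0 < hit enum p B A x) \/ 0 < hit enum p B A z.
Proof. intros HAB n. induction n; intros z b Hb Hp; simpl in Hp; destruct Hp as [w [Hzw Hw]].
  - simpl in Hw; subst w. right. apply (hit_ge_step B A z b); auto. intro; eauto.
  - destruct (IHn w b Hb Hw) as [H|H]. left; auto.
    destruct (excluded_middle_informative (A w)). left; eauto.
    right. apply (hit_ge_step B A z w); auto.
Qed.

Lemma cap_pos A B : (forall z, A z -> B z -> False) -> (exists a, A a) -> (exists b, B b) ->
  0 < cap enum p mu A B.
Proof. intros HAB [a Ha] [b Hb]. destruct (Hirr a b) as [n Hn]. destruct n.
  simpl in Hn; subst; exfalso; eauto.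
  assert (E : exists x, A x /\ 0 < hit enum p B A x).
  { destruct (hit_pos_path A B HAB n a b Hb Hn); eauto. }
  destruct E as [x [Hx Hpos]]. unfold cap, sumIn.
  eapply Rlt_le_trans; [|apply (term_le St enum _ x He)].
  cbv beta. rewrite pif_T by auto. apply Rmult_lt_0_compat; auto. apply mu_pos.
  apply smb_mub. intro z. pose proof (Hmu0 z); pose proof (hit01 B A z). pifs; rewrite ?Rabs_R0; try lra.
  rewrite Rabs_right; nra.
  intro z. pose proof (Hmu0 z); pose proof (hit01 B A z). pifs; nra.
Qed.

Lemma Transfer V P Q : (forall z, P z -> V z) -> (forall z, Q z -> V z) ->
  sumS enum (fun x => pif (P x) (mu x * sumS enum (fun y => pif (Q y) (Hy V y x) 0)) 0) =
  sumS enum (fun y => pif (Q y) (mu y * sumS enum (fun x => pif (P x) (Hy V x y) 0)) 0).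
Proof.
  intros HP HQ.
  set (a := fun x y => pif (P x) (pif (Q y) (mu x * Hy V y x) 0) 0).
  assert (Ha0 : forall x y, 0 <= a x y). { intros; unfold a. pose proof (Hmu0 x); pose proof (Hy01 V y x). pifs; nra. }
  assert (HQs : forall x, smb St enum (fun y => pif (Q y) (Hy V y x) 0)).
  { intro x. eapply smb_ext; [|apply (smb_Hy V Q x (fun _ => 1))]; auto. intro; pifs; ring. intro; rewrite Rabs_R1; lra. }
  assert (HPs : forall y, smb St enum (fun x => pif (P x) (Hy V x y) 0)).
  { intro y. eapply smb_ext; [|apply (smb_Hy V P y (fun _ => 1))]; auto. intro; pifs; ring. intro; rewrite Rabs_R1; lra. }
  assert (HQb : forall x, 0 <= sumS enum (fun y => pif (Q y) (Hy V y x) 0) <= 1).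
  { intro x. split. apply sumS_nonneg; auto. intro y; pose proof (Hy01 V y x); pifs; lra.
    pose proof (sum_Hy_bound V Q x (fun _ => 1) HQ) as H. rewrite (sumS_ext St enum _ (fun y => pif (Q y) (Hy V y x) 0)) in H.
    apply Rabs_le_between in H. lra. intro; rewrite Rabs_R1; lra. intro; pifs; ring. }
  assert (Hsa : forall x, smb St enum (a x) /\ sumS enum (a x) = pif (P x) (mu x * sumS enum (fun y => pif (Q y) (Hy V y x) 0)) 0).
  { intro x. unfold a. destruct (excluded_middle_informative (P x)).
    - split. eapply smb_ext; [|apply (smb_scal St enum (mu x)), HQs]. intro; pifs; try tauto; ring.
      rewrite (pif_T (P x)) by auto. rewrite <- sumS_scal by auto. apply sumS_ext. intro; pifs; try tauto; ring.
    - split. eapply smb_ext; [|apply smb_0]. intro; pifs; try tauto; ring.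
      rewrite (pif_F (P x)) by auto. rewrite (sumS_ext St enum _ (fun _ => 0)). apply sumS_0. intro; pifs; try tauto; ring. }
  assert (Hb : smb St enum (fun x => sumS enum (a x))).
  { apply smb_mub. intro x. rewrite (proj2 (Hsa x)). pose proof (Hmu0 x). pose proof (HQb x). pifs; rewrite ?Rabs_R0; try lra.
    rewrite Rabs_right; nra. }
  destruct (tonelliS St enum a He Ha0 (fun x => proj1 (Hsa x)) Hb) as [T1 [T2 T3]].
  rewrite <- (sumS_ext St enum _ _ (fun x => proj2 (Hsa x))). rewrite <- T3. apply sumS_ext. intro y.
  unfold a. destruct (excluded_middle_informative (Q y)).
  - rewrite (pif_T (Q y)) by auto. rewrite <- sumS_scal by auto. apply sumS_ext. intro x. pifs; try tauto; try ring.
    apply Hy_sym; auto.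
  - rewrite (pif_F (Q y)) by auto. rewrite (sumS_ext St enum _ (fun _ => 0)). apply sumS_0. intro; pifs; try tauto; ring.
Qed.

Lemma hitn_monoA A A' B n x : (forall z, A z -> A' z) -> hitn St enum p A B n x <= hitn St enum p A' B n x.
Proof. intro HA. revert x; induction n; intro x. simpl; lra.
  rewrite !hitn_S. apply sumS_le. apply psmb01; intro; pifs; try lra; apply hitn01.
  apply psmb01; intro; pifs; try lra; apply hitn01.
  intro y. apply Rmult_le_compat_l. apply Hp0. pifs; try lra; try (exfalso; eauto; fail). apply hitn01. auto. Qed.

Lemma hit_monoA A A' B x : (forall z, A z -> A' z) -> hit enum p A B x <= hit enum p A' B x.
Proof. intro HA. apply Rle_cv_lim with (fun n => hitn St enum p A B n x) (fun n => hitn St enum p A' B n x).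
  intro; apply hitn_monoA; auto. apply hit_cv. apply hit_cv. Qed.


Lemma smb_pifmu (W : St -> Prop) g : (forall x, Rabs (g x) <= 1) -> smb St enum (fun x => pif (W x) (mu x * g x) 0).
Proof. intro Hg. apply smb_mub. intro x. pose proof (Hmu0 x). specialize (Hg x). pifs. rewrite Rabs_mult, Rabs_right by lra. nra.
  rewrite Rabs_R0; lra. Qed.

Lemma Hy_hit V A B x : (forall z, A z -> B z -> False) -> (forall z, A z -> V z) -> (forall z, B z -> V z) ->
  (forall z, V z -> A z \/ B z) ->
  hit enum p A B x = sumS enum (fun y => pif (A y) (Hy V y x) 0).
Proof. intros HAB HA HB HV. rewrite (proj2 (SM V A B x HAB HA HB)). apply sumS_ext. intro y. unfold h.
  destruct (excluded_middle_informative (V y)). destruct (HV y v).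
  rewrite pif_T, pif_T, pif_T by auto; ring. rewrite pif_T, pif_F, pif_T, pif_F by (auto; intro; eauto); ring.
  rewrite pif_F by auto. rewrite pif_F; auto. Qed.

Lemma row_eq V A B x : (forall z, A z -> B z -> False) -> (forall z, A z -> V z) -> (forall z, B z -> V z) ->
  (exists t, V t) ->
  sumS enum (fun y => pif (V y) (Hy V y x * (h enum p A B x - h enum p A B y)) 0) = h enum p A B x - hit enum p A B x.
Proof. intros HAB HA HB Hne.
  rewrite (sumS_ext St enum _ (fun y => h enum p A B x * pif (V y) (Hy V y x) 0 - pif (V y) (Hy V y x * h enum p A B y) 0))
    by (intro; pifs; ring).
  rewrite sumS_minus, sumS_scal, (proj2 (HySum V x)), <- (proj2 (SM V A B x HAB HA HB)).
  rewrite rec by auto. ring. apply HySum. apply smb_scal, HySum. apply SM; auto.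
Qed.

Lemma Rabs_h_diff A B x y : Rabs (h enum p A B x - h enum p A B y) <= 1.
Proof. pose proof (h01 A B x); pose proof (h01 A B y). apply Rabs_le; lra. Qed.

Lemma split_sum V W1 W2 g x : (forall z, V z <-> W1 z \/ W2 z) -> (forall z, W1 z -> W2 z -> False) ->
  (forall y, Rabs (g y) <= 1) ->
  sumS enum (fun y => pif (V y) (Hy V y x * g y) 0) =
  sumS enum (fun y => pif (W1 y) (Hy V y x * g y) 0) + sumS enum (fun y => pif (W2 y) (Hy V y x * g y) 0).
Proof. intros HV H12 Hg. rewrite <- sumS_plus. apply sumS_ext. intro y. specialize (HV y).
  pifs; try tauto; try ring. exfalso; eauto.
  apply smb_Hy; auto. intros; apply HV; auto. apply smb_Hy; auto. intros; apply HV; auto. Qed.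

Lemma partA A B U1 U2 d :
  (forall z, A z -> B z -> False) -> (exists a, A a) -> (exists b, B b) ->
  (forall z, A z -> U1 z) -> (forall z, B z -> U2 z) -> (forall z, U1 z -> U2 z -> False) ->
  (forall x, U1 x -> 1 - d <= h enum p A B x) -> (forall x, U2 x -> h enum p A B x <= d) ->
  (1 - 2 * d) * cap enum p mu U1 U2 <= cap enum p mu A B /\ cap enum p mu A B <= cap enum p mu U1 U2 /\
  0 < cap enum p mu A B.
Proof.
  intros HAB [a Ha] [b Hb] HA1 HB2 H12 Hd1 Hd2.
  set (V := fun x => U1 x \/ U2 x).
  assert (HVne : exists t, V t). { exists a; left; auto. }
  assert (Hrow : forall x, U1 x ->
    sumS enum (fun y => pif (U1 y) (Hy V y x * (h enum p A B x - h enum p A B y)) 0) +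
    sumS enum (fun y => pif (U2 y) (Hy V y x * (h enum p A B x - h enum p A B y)) 0) = pif (A x) (hit enum p B A x) 0).
  { intros x Hx. rewrite <- (split_sum V U1 U2). rewrite row_eq; auto.
    destruct (excluded_middle_informative (A x)).
    - rewrite pif_T by auto. unfold h. rewrite pif_T by auto. pose proof (hit_compl A B x HAB). 
      assert (hit enum p A B x + hit enum p B A x = 1) by (apply H; exists a; auto). lra.
    - rewrite pif_F by auto. unfold h. rewrite pif_F, pif_F by (auto; intro; eauto). ring.
    - intros; unfold V; auto. - intros; unfold V; auto. - intros; unfold V; tauto.
    - auto. - intro; apply Rabs_h_diff. }
  assert (Hr1 : forall x, Rabs (sumS enum (fun y => pif (U1 y) (Hy V y x * (h enum p A B x - h enum p A B y)) 0)) <= 1).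
  { intro x. apply sum_Hy_bound. intros; unfold V; auto. intro; apply Rabs_h_diff. }
  assert (Hr2 : forall x, Rabs (sumS enum (fun y => pif (U2 y) (Hy V y x * (h enum p A B x - h enum p A B y)) 0)) <= 1).
  { intro x. apply sum_Hy_bound. intros; unfold V; auto. intro; apply Rabs_h_diff. }
  assert (HQ : forall x, hit enum p U2 U1 x = sumS enum (fun y => pif (U2 y) (Hy V y x) 0)).
  { intro x. apply Hy_hit. intros z H1 H2; eauto. intros; unfold V; auto. intros; unfold V; auto. intros z Hz; unfold V in Hz; tauto. }
  assert (HQb : forall x, Rabs (sumS enum (fun y => pif (U2 y) (Hy V y x) 0)) <= 1).
  { intro x. rewrite <- HQ. pose proof (hit01 U2 U1 x). apply Rabs_le; lra. }
  assert (HcapA : cap enum p mu A B =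
     sumS enum (fun x => pif (U1 x) (mu x * sumS enum (fun y => pif (U1 y) (Hy V y x * (h enum p A B x - h enum p A B y)) 0)) 0) +
     sumS enum (fun x => pif (U1 x) (mu x * sumS enum (fun y => pif (U2 y) (Hy V y x * (h enum p A B x - h enum p A B y)) 0)) 0)).
  { rewrite <- sumS_plus by (apply smb_pifmu; auto). unfold cap, sumIn. apply sumS_ext. intro x.
    destruct (excluded_middle_informative (U1 x)).
    - rewrite !(pif_T (U1 x)) by auto. rewrite <- Rmult_plus_distr_l, Hrow by auto. pifs; ring.
    - rewrite !(pif_F (U1 x)) by auto. rewrite pif_F. ring. intro; eauto. }
  rewrite (Green V U1 (h enum p A B)) in HcapA. 2: { intros; unfold V; auto. } 2: apply h01.
  rewrite Rplus_0_l in HcapA.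
  assert (HcapU : cap enum p mu U1 U2 = sumS enum (fun x => pif (U1 x) (mu x * sumS enum (fun y => pif (U2 y) (Hy V y x) 0)) 0)).
  { unfold cap, sumIn. apply sumS_ext. intro x. rewrite HQ. auto. }
  split; [|split].
  - rewrite HcapA, HcapU. rewrite <- sumS_scal by (apply smb_pifmu; auto). apply sumS_le.
    apply smb_scal, smb_pifmu; auto. apply smb_pifmu; auto.
    intro x. destruct (excluded_middle_informative (U1 x)); [|rewrite !pif_F by auto; lra].
    rewrite !pif_T by auto. rewrite <- Rmult_assoc, (Rmult_comm _ (mu x)), Rmult_assoc. apply Rmult_le_compat_l. apply Hmu0.
    rewrite <- sumS_scal. apply sumS_le.
    apply smb_scal. eapply smb_ext; [|apply (smb_Hy V U2 x (fun _ => 1))]. intro; pifs; ring. intros; unfold V; auto.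
      intro; rewrite Rabs_R1; lra.
    apply smb_Hy. intros; unfold V; auto. intro; apply Rabs_h_diff.
    intro y. pose proof (Hy01 V y x). destruct (excluded_middle_informative (U2 y)); [|rewrite !pif_F by auto; lra].
    rewrite !pif_T by auto. specialize (Hd1 x u). specialize (Hd2 y u0). nra.
    eapply smb_ext; [|apply (smb_Hy V U2 x (fun _ => 1))]. intro; pifs; ring. intros; unfold V; auto.
      intro; rewrite Rabs_R1; lra.
  - rewrite HcapA, HcapU. apply sumS_le. apply smb_pifmu; auto. apply smb_pifmu; auto.
    intro x. destruct (excluded_middle_informative (U1 x)); [|rewrite !pif_F by auto; lra].
    rewrite !pif_T by auto. apply Rmult_le_compat_l. apply Hmu0. apply sumS_le.
    apply smb_Hy. intros; unfold V; auto. intro; apply Rabs_h_diff.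
    eapply smb_ext; [|apply (smb_Hy V U2 x (fun _ => 1))]. intro; pifs; ring. intros; unfold V; auto.
      intro; rewrite Rabs_R1; lra.
    intro y. pose proof (Hy01 V y x). destruct (excluded_middle_informative (U2 y)); [|rewrite !pif_F by auto; lra].
    rewrite !pif_T by auto. pose proof (h01 A B x); pose proof (h01 A B y). nra.
  - apply cap_pos; eauto.
Qed.


Lemma partB Mi Mo X d Kr :
  (forall z, Mi z -> Mo z -> False) -> (exists a, Mi a) -> (forall z, X z -> Mi z -> False) ->
  (forall z, X z -> Mo z -> False) ->
  (forall x, X x -> 1 <= Kr * hit enum p Mi Mo x) -> (forall x, X x -> d < hit enum p Mo Mi x) -> 0 < d -> 0 <= Kr ->
  d * sumS enum (fun x => pif (X x) (mu x * hit enum p (fun z => Mi z \/ Mo z) X x) 0) <= Kr * cap enum p mu Mi Mo.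
Proof.
  intros HMM [a Ha] HXi HXo HK Hd Hd0 HK0.
  set (M := fun z => Mi z \/ Mo z). set (V := fun z => X z \/ M z).
  assert (HXM : forall z, X z -> M z -> False). { intros z H1 [H2|H2]; eauto. }
  assert (Hrow : forall x, X x ->
     sumS enum (fun y => pif (X y) (Hy V y x * (h enum p Mi Mo x - h enum p Mi Mo y)) 0) +
     sumS enum (fun y => pif (M y) (Hy V y x * (h enum p Mi Mo x - h enum p Mi Mo y)) 0) = 0).
  { intros x Hx. rewrite <- (split_sum V X M). rewrite row_eq. unfold h. rewrite !pif_F by eauto. ring.
    auto. intros; unfold V, M; auto. intros; unfold V, M; auto. exists a; unfold V, M; auto.
    intro; unfold V; tauto. auto. intro; apply Rabs_h_diff. }
  assert (HG : sumS enum (fun x => pif (X x) (mu x * sumS enum (fun y => pif (X y) (Hy V y x * (h enum p Mi Mo x - h enum p Mi Mo y)) 0)) 0) = 0).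
  { apply Green. intros; unfold V; auto. apply h01. }
  assert (HrM : sumS enum (fun x => pif (X x) (mu x * sumS enum (fun y => pif (M y) (Hy V y x * (h enum p Mi Mo x - h enum p Mi Mo y)) 0)) 0) = 0).
  { rewrite (sumS_ext St enum _ (fun x => 0 - pif (X x) (mu x * sumS enum (fun y => pif (X y) (Hy V y x * (h enum p Mi Mo x - h enum p Mi Mo y)) 0)) 0)).
    rewrite sumS_minus, sumS_0. rewrite HG. ring. apply smb_0.
    apply smb_pifmu. intro; apply sum_Hy_bound. intros; unfold V; auto. intro; apply Rabs_h_diff.
    intro x. destruct (excluded_middle_informative (X x)). rewrite !pif_T by auto.
    assert (E := Hrow x x0). nra. rewrite !pif_F by auto. ring. }
  assert (HhMX : forall x, hit enum p M X x = sumS enum (fun y => pif (M y) (Hy V y x) 0)).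
  { intro x. apply Hy_hit. intros z H1 H2; eauto. intros; unfold V; auto. intros; unfold V; auto. intro z; unfold V; tauto. }
  assert (HhMi : forall x, hit enum p Mi (fun z => X z \/ Mo z) x = sumS enum (fun y => pif (Mi y) (Hy V y x) 0)).
  { intro x. apply Hy_hit. intros z H1 [H2|H2]; eauto. intros; unfold V, M; auto. intros z [H|H]; unfold V, M; auto.
    intro z; unfold V, M; tauto. }
  assert (HhX : forall y, hit enum p X M y = sumS enum (fun x => pif (X x) (Hy V x y) 0)).
  { intro y. apply Hy_hit. auto. intros; unfold V; auto. intros; unfold V; auto. intro z; unfold V; tauto. }
  assert (HrM' : forall x, X x -> sumS enum (fun y => pif (M y) (Hy V y x * (h enum p Mi Mo x - h enum p Mi Mo y)) 0) =
       hit enum p Mi Mo x * hit enum p M X x - hit enum p Mi (fun z => X z \/ Mo z) x).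
  { intros x Hx. rewrite HhMX, HhMi.
    rewrite (sumS_ext St enum _ (fun y => hit enum p Mi Mo x * pif (M y) (Hy V y x) 0 - pif (Mi y) (Hy V y x) 0)).
    rewrite sumS_minus, sumS_scal. auto.
    eapply smb_ext; [|apply (smb_Hy V M x (fun _ => 1))]. intro; pifs; ring. intros; unfold V; auto. intro; rewrite Rabs_R1; lra.
    apply smb_scal. eapply smb_ext; [|apply (smb_Hy V M x (fun _ => 1))]. intro; pifs; ring. intros; unfold V; auto. intro; rewrite Rabs_R1; lra.
    eapply smb_ext; [|apply (smb_Hy V Mi x (fun _ => 1))]. intro; pifs; ring. intros; unfold V, M; auto. intro; rewrite Rabs_R1; lra.
    intro y. unfold h. rewrite (pif_F (Mi x)) by eauto. rewrite (pif_F (Mo x)) by eauto. unfold M.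
    pifs; try tauto; try ring; exfalso; eauto. }
  assert (Hstar : sumS enum (fun x => pif (X x) (mu x * (hit enum p Mi Mo x * hit enum p M X x)) 0) =
                  sumS enum (fun x => pif (X x) (mu x * hit enum p Mi (fun z => X z \/ Mo z) x) 0)).
  { assert (E : sumS enum (fun x => pif (X x) (mu x * (hit enum p Mi Mo x * hit enum p M X x)) 0 - pif (X x) (mu x * hit enum p Mi (fun z => X z \/ Mo z) x) 0) = 0).
    { rewrite <- HrM. apply sumS_ext. intro x. destruct (excluded_middle_informative (X x)).
      rewrite !pif_T by auto. rewrite HrM' by auto. ring. rewrite !pif_F by auto. ring. }
    rewrite sumS_minus in E. lra.
    apply smb_pifmu. intro x; pose proof (hit01 Mi Mo x); pose proof (hit01 M X x). apply Rabs_le; split; nra.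
    apply smb_pifmu. intro x; pose proof (hit01 Mi (fun z => X z \/ Mo z) x). apply Rabs_le; lra. }
  assert (HT : sumS enum (fun x => pif (X x) (mu x * hit enum p Mi (fun z => X z \/ Mo z) x) 0) =
               sumS enum (fun y => pif (Mi y) (mu y * hit enum p X M y) 0)).
  { rewrite (sumS_ext St enum _ _ (fun x => f_equal (fun t => pif (X x) (mu x * t) 0) (HhMi x))).
    rewrite (sumS_ext St enum (fun y => pif (Mi y) (mu y * hit enum p X M y) 0) _ (fun y => f_equal (fun t => pif (Mi y) (mu y * t) 0) (HhX y))).
    apply Transfer. intros; unfold V; auto. intros; unfold V, M; auto. }
  assert (Hpt : forall y, Mi y -> d * hit enum p X M y <= hit enum p Mo Mi y).
  { intros y Hy'. pose proof (SM V Mo Mi y (fun z h1 h2 => HMM z h2 h1) (fun z Hz => or_intror (or_intror Hz)) (fun z Hz => or_intror (or_introl Hz))) as [SM1 SM2].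
    rewrite HhX. rewrite SM2.
    rewrite <- sumS_scal. apply sumS_le. apply smb_scal.
    eapply smb_ext; [|apply (smb_Hy V X y (fun _ => 1))]. intro; pifs; ring. intros; unfold V; auto. intro; rewrite Rabs_R1; lra.
    apply SM1.
    intro z. pose proof (Hy01 V z y). pose proof (h01 Mo Mi z). destruct (excluded_middle_informative (X z)).
    rewrite (pif_T (X z)), (pif_T (V z)) by (unfold V; auto). unfold h. rewrite !pif_F by eauto.
    specialize (Hd z x). nra.
    rewrite (pif_F (X z)) by auto. pifs; nra.
    eapply smb_ext; [|apply (smb_Hy V X y (fun _ => 1))]. intro; pifs; ring. intros; unfold V; auto. intro; rewrite Rabs_R1; lra. }
  apply Rle_trans with (d * (Kr * sumS enum (fun x => pif (X x) (mu x * (hit enum p Mi Mo x * hit enum p M X x)) 0))).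
  - apply Rmult_le_compat_l. lra. rewrite <- sumS_scal. apply sumS_le.
    apply smb_pifmu. intro x; pose proof (hit01 M X x). apply Rabs_le; lra.
    apply smb_scal, smb_pifmu. intro x; pose proof (hit01 Mi Mo x); pose proof (hit01 M X x). apply Rabs_le; split; nra.
    intro x. destruct (excluded_middle_informative (X x)). rewrite !pif_T by auto.
    specialize (HK x x0). pose proof (hit01 M X x). pose proof (Hmu0 x). 
    assert (0 <= mu x * hit enum p M X x) by nra. 
    replace (Kr * (mu x * (hit enum p Mi Mo x * hit enum p M X x))) with ((Kr * hit enum p Mi Mo x) * (mu x * hit enum p M X x)) by ring.
    nra. rewrite !pif_F by auto. lra.
    apply smb_pifmu. intro x; pose proof (hit01 Mi Mo x); pose proof (hit01 M X x). apply Rabs_le; split; nra.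
  - rewrite Hstar, HT. unfold cap, sumIn.
    replace (d * (Kr * sumS enum (fun y => pif (Mi y) (mu y * hit enum p X M y) 0))) with (Kr * (d * sumS enum (fun y => pif (Mi y) (mu y * hit enum p X M y) 0))) by ring.
    apply Rmult_le_compat_l; auto. rewrite <- sumS_scal. apply sumS_le.
    apply smb_scal, smb_pifmu. intro y; pose proof (hit01 X M y). apply Rabs_le; lra.
    apply smb_pifmu. intro y; pose proof (hit01 Mo Mi y). apply Rabs_le; lra.
    intro y. destruct (excluded_middle_informative (Mi y)). rewrite !pif_T by auto. specialize (Hpt y m). pose proof (Hmu0 y). nra.
    rewrite !pif_F by auto. lra.
    apply smb_pifmu. intro y; pose proof (hit01 X M y). apply Rabs_le; lra.
Qed.


Lemma hit_empty A B x : (forall z, ~ A z) -> hit enum p A B x = 0.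
Proof. intro HA. apply UL_sequence with (fun n => hitn St enum p A B n x). apply hit_cv.
  apply Un_cv_ext with (fun _ => 0). 2: apply cv_const.
  intro n. revert x. induction n; intro x. reflexivity. rewrite hitn_S.
  rewrite (sumS_ext St enum _ (fun _ => 0)). symmetry; apply sumS_0.
  intro y. rewrite <- IHn. pifs; try ring. exfalso; eapply HA; eauto. Qed.

Fixpoint fsum (f : nat -> R) n := match n with O => 0 | S n => fsum f n + f n end.

Lemma fsum_le f n c : (forall j, (j < n)%nat -> f j <= c) -> fsum f n <= INR n * c.
Proof. induction n; intro H; cbn [fsum]. simpl; lra. rewrite S_INR. assert (fsum f n <= INR n * c) by (apply IHn; intros; apply H; lia).
  assert (f n <= c) by (apply H; lia). lra. Qed.

Lemma hit_family (Kn : nat) (M : nat -> St -> Prop) x :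
  (forall j k z, (j < Kn)%nat -> (k < Kn)%nat -> j <> k -> M j z -> M k z -> False) -> (exists t, Mall Kn M t) ->
  fsum (fun j => hit enum p (M j) (fun y => Mall Kn M y /\ ~ M j y) x) Kn = 1.
Proof.
  intros Hd Hne.
  assert (C : forall n, (n <= Kn)%nat ->
     fsum (fun j => hit enum p (M j) (fun y => Mall Kn M y /\ ~ M j y) x) n =
     hit enum p (fun z => exists j, (j < n)%nat /\ M j z) (fun y => Mall Kn M y /\ ~ (exists j, (j < n)%nat /\ M j y)) x).
  { induction n; intro Hn.
    - simpl. symmetry. apply hit_empty. intros z [j [Hj _]]; lia.
    - cbn [fsum]. rewrite IHn by lia.
      set (A := fun z => exists j, (j < n)%nat /\ M j z).
      set (C := fun y => Mall Kn M y /\ ~ (exists j, (j < S n)%nat /\ M j y)).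
      assert (HAB : forall z, A z -> M n z -> False). { intros z [j [Hj H1]] H2. apply (Hd j n z); auto; lia. }
      assert (HAC : forall z, A z -> C z -> False). { intros z [j [Hj H1]] [_ H2]. apply H2. exists j; split; auto; lia. }
      assert (HBC : forall z, M n z -> C z -> False). { intros z H1 [_ H2]. apply H2. exists n; split; auto. }
      pose proof (hit_add A (M n) C x HAB HAC HBC) as E.
      rewrite (set_ext (fun z => M n z \/ C z) (fun y => Mall Kn M y /\ ~ A y)) in E.
      rewrite (set_ext (fun z => A z \/ C z) (fun y => Mall Kn M y /\ ~ M n y)) in E.
      rewrite (set_ext (fun z => A z \/ M n z) (fun z => exists j, (j < S n)%nat /\ M j z)) in E.
      exact E.
      + intro z. split. intros [[j [Hj H1]]|H1]. exists j; split; auto; lia. exists n; split; auto.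
        intros [j [Hj H1]]. destruct (Nat.eq_dec j n). subst; right; auto. left; exists j; split; auto; lia.
      + intro z. split. intros [[j [Hj H1]]|[H1 H2]]. split. exists j; split; auto; lia. intro H2. apply (Hd j n z); auto; lia.
        split; auto. intro H3. apply H2. exists n; split; auto.
        intros [H1 H2]. destruct (excluded_middle_informative (A z)). left; auto. right. split; auto.
        intros [j [Hj H3]]. destruct (Nat.eq_dec j n). subst; auto. apply n0. exists j; split; auto; lia.
      + intro z. split. intros [H1|[H1 H2]]. split. exists n; split; auto; lia. intro H2. eauto.
        split; auto. intro H3. apply H2. destruct H3 as [j [Hj H3]]. exists j; split; auto; lia.
        intros [H1 H2]. destruct (excluded_middle_informative (M n z)). left; auto. right. split; auto.
        intros [j [Hj H3]]. destruct (Nat.eq_dec j n). subst; auto. apply H2. exists j; split; auto; lia. }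
  rewrite C by lia. rewrite (set_ext (fun y => Mall Kn M y /\ ~ (exists j, (j < Kn)%nat /\ M j y)) Emp).
  apply rec. auto. intro z. unfold Emp, Mall. tauto.
Qed.

Lemma fold_max_ge (l : list R) a : In a l -> a <= fold_right Rmax 0 l.
Proof. induction l; simpl; intro H. destruct H. destruct H. subst. apply Rmax_l.
  eapply Rle_trans; [apply IHl; auto|apply Rmax_r]. Qed.

End Chain.

Theorem mainTheorem14
  (S : Type) (enum : nat -> option S) (p : S -> S -> R) (mu : S -> R)
  (K : nat) (M : nat -> S -> Prop) (Sp : nat -> S -> Prop) (rho : R)
  (i : nat) (IB : nat -> Prop) (delta : R)
  (Hchain : chain_setting enum p mu)
  (HK : (2 <= K)%nat)
  (Hfam : metastable_family K M)
  (Hrho : 0 < rho)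
  (Hmeta : metastable enum p mu K M rho)
  (Hpart : metastable_partition enum p K M Sp)
  (Hi : (i < K)%nat)
  (HIB : forall j, IB j -> (j < K)%nat /\ j <> i)
  (HIBne : exists j, IB j)
  (Hdelta : 0 < delta < 1 / 2) :
  let B := unionM M IB in
  let U1 := harm_nbhd enum p Sp (fun j => j = i) (M i) B delta in
  let U2 := harm_nbhd enum p Sp IB B (M i) delta in
  (1 - 2 * delta <= cap enum p mu (M i) B / cap enum p mu U1 U2 <= 1) /\
  muS enum mu (fun x => Sp i x /\ ~ U1 x) <= rho * / delta * muS enum mu (M i).
Proof.
  intros B U1 U2.
  destruct Hfam as [Hne Hdisj]. destruct Hpart as [Pcov [Pdisj [Pval PM]]].
  assert (HBi : forall z, M i z -> B z -> False).
  { intros z H1 [j [Hj H2]]. destruct (HIB j Hj). apply (Hdisj i j z); auto. }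
  assert (HMine : exists a, M i a) by (apply Hne; auto).
  assert (HBne : exists b, B b).
  { destruct HIBne as [j Hj]. destruct (Hne j) as [b Hb]. apply HIB; auto. exists b, j; auto. }
  assert (HA1 : forall z, M i z -> U1 z).
  { intros z Hz. split. exists i; auto. unfold h. rewrite pif_T by auto. lra. }
  assert (HB2 : forall z, B z -> U2 z).
  { intros z Hz. split. destruct Hz as [j [Hj Hz]]. exists j; split; auto. apply PM; auto. apply HIB; auto.
    unfold h. rewrite pif_T by auto. lra. }
  assert (H12 : forall z, U1 z -> U2 z -> False).
  { intros z [[j [Hj1 Hj2]] _] [[k [Hk1 Hk2]] _]. subst j. destruct (HIB k Hk1). apply (Pdisj i k z); auto. }
  assert (Hd1 : forall x, U1 x -> 1 - delta <= h enum p (M i) B x). { intros x [_ H]; auto. }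
  assert (Hd2 : forall x, U2 x -> h enum p (M i) B x <= delta).
  { intros x Hx. destruct (excluded_middle_informative (B x)).
    - unfold h. rewrite pif_F by eauto. rewrite pif_T by auto. lra.
    - destruct (excluded_middle_informative (M i x)). exfalso; eauto.
      destruct Hx as [_ Hx]. unfold h in *. rewrite pif_F in * by auto. rewrite pif_F in * by auto.
      pose proof (hit_compl S enum p mu Hchain (M i) B x HBi) as E.
      assert (hit enum p (M i) B x + hit enum p B (M i) x = 1). { apply E. destruct HMine as [a Ha]; exists a; auto. }
      lra. }
  split.
  - destruct (partA S enum p mu Hchain (M i) B U1 U2 delta HBi HMine HBne HA1 HB2 H12 Hd1 Hd2) as [P1 [P2 P3]].
    assert (Hc : 0 < cap enum p mu U1 U2) by lra.
    split.
    + apply Rmult_le_reg_r with (cap enum p mu U1 U2); auto. unfold Rdiv. rewrite Rmult_assoc, Rinv_l by lra. lra.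
    + apply Rmult_le_reg_r with (cap enum p mu U1 U2); auto. unfold Rdiv. rewrite Rmult_assoc, Rinv_l by lra. lra.
  - set (X := fun x => Sp i x /\ ~ U1 x).
    set (Mo := fun x => Mall K M x /\ ~ M i x).
    assert (Hmu0 : forall x, 0 <= mu x) by (apply Hchain).
    assert (HmuS : forall A : S -> Prop, 0 <= muS enum mu A).
    { intro A. unfold muS, sumIn. apply sumS_nonneg. apply (smb_mub S enum p mu Hchain). intro x.
      pose proof (Hmu0 x). pifs; rewrite ?Rabs_R0; try lra. rewrite Rabs_right; lra.
      intro x. pose proof (Hmu0 x). pifs; lra. }
    assert (HmuSpos : forall A : S -> Prop, (exists x, A x) -> 0 < muS enum mu A).
    { intros A [x Hx]. unfold muS, sumIn. eapply Rlt_le_trans; [|apply (term_le S enum _ x (He S enum p mu Hchain))].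
      cbv beta. rewrite pif_T by auto. apply (mu_pos S enum p mu Hchain).
      apply (smb_mub S enum p mu Hchain). intro z.
      pose proof (Hmu0 z). pifs; rewrite ?Rabs_R0; try lra. rewrite Rabs_right; lra.
      intro z. pose proof (Hmu0 z). pifs; lra. }
    destruct (classic (exists x, X x)) as [HX|HX].
    2: { assert (E : muS enum mu X = 0).
         { unfold muS, sumIn. rewrite (sumS_ext S enum _ (fun _ => 0)). apply sumS_0.
           intro x. rewrite pif_F. auto. intro Hx; apply HX; exists x; auto. }
         fold X. rewrite E. pose proof (HmuS (M i)). 
         assert (0 < / delta) by (apply Rinv_0_lt_compat; lra).
         assert (0 <= rho * / delta) by nra. nra. }
    fold X.
    assert (HXM : forall x, X x -> ~ Mall K M x).
    { intros x [Hs Hu] [j [Hj Hm]]. destruct (Nat.eq_dec j i). subst j. apply Hu; auto.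
      apply (Pdisj i j x); auto. }
    pose proof (Hmeta X HX HXM) as Hm.
    assert (Hval : forall x, X x -> 1 <= INR K * hit enum p (M i) Mo x).
    { intros x Hx.
      pose proof (hit_family S enum p mu Hchain K M x Hdisj) as HF.
      rewrite <- HF. 2: { destruct HMine as [a Ha]. exists a, i; auto. }
      apply (fsum_le (fun j => hit enum p (M j) (fun y => Mall K M y /\ ~ M j y) x) K).
      intros j Hj. destruct (Nat.eq_dec j i). subst; apply Rle_refl.
      apply (Pval i x Hi (proj1 Hx) j Hj n). }
    assert (HBMo : forall z, B z -> Mo z).
    { intros z Hz. split. destruct Hz as [j [Hj Hz]]. exists j. split; auto. apply HIB; auto. intro; eauto. }
    assert (Hdl : forall x, X x -> delta < hit enum p Mo (M i) x).
    { intros x [Hs Hu].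
      assert (Hn : ~ (1 - delta <= h enum p (M i) B x)). { intro H. apply Hu. split; auto. exists i; auto. }
      assert (HnM : ~ M i x). { intro H; apply Hu; auto. }
      assert (HnB : ~ B x). { intro H. apply (HXM x). split; auto. apply HBMo in H. apply H. }
      unfold h in Hn. rewrite pif_F, pif_F in Hn by auto.
      pose proof (hit_compl S enum p mu Hchain (M i) B x HBi) as E.
      assert (hit enum p (M i) B x + hit enum p B (M i) x = 1). { apply E. destruct HMine as [a Ha]; exists a; auto. }
      pose proof (hit_monoA S enum p mu Hchain B Mo (M i) x HBMo). lra. }
    assert (HMM : forall z, M i z -> Mo z -> False). { intros z H1 [_ H2]; auto. }
    assert (HXi : forall z, X z -> M i z -> False). { intros z Hz H. apply (HXM z Hz). exists i; auto. }
    assert (HXo : forall z, X z -> Mo z -> False). { intros z Hz [H _]. apply (HXM z Hz H). }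
    pose proof (partB S enum p mu Hchain (M i) Mo X delta (INR K) HMM HMine HXi HXo Hval Hdl ltac:(lra) (pos_INR K)) as PB.
    rewrite (set_ext (fun z => M i z \/ Mo z) (Mall K M)) in PB.
    2: { intro z. unfold Mo. split. intros [H|[H _]]; auto. exists i; auto. intro H. destruct (classic (M i z)); auto. }
    assert (Hmo : exists b, Mo b).
    { set (j := if Nat.eq_dec i 0 then 1%nat else 0%nat).
      assert (Hj : (j < K)%nat /\ j <> i). { unfold j; destruct (Nat.eq_dec i 0); lia. }
      destruct (Hne j (proj1 Hj)) as [b Hb]. exists b. split. exists j; split; auto; apply Hj.
      intro H. apply (Hdisj i j b); auto. apply Hj. intro; apply (proj2 Hj); auto. }
    pose proof (cap_pos S enum p mu Hchain (M i) Mo HMM HMine Hmo) as Hcp.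
    assert (Hesc : esc S enum p mu K M i = cap enum p mu (M i) Mo / muS enum mu (M i)) by reflexivity.
    assert (Hpe : esc S enum p mu K M i <= p_esc S enum p mu K M).
    { unfold p_esc. apply fold_max_ge. apply in_map. apply in_seq. lia. }
    assert (HmX : 0 < muS enum mu X) by (apply HmuSpos; auto).
    assert (Hmi : 0 < muS enum mu (M i)) by (apply HmuSpos; auto).
    assert (HK0 : 2 <= INR K) by (replace 2 with (INR 2) by (simpl; lra); apply le_INR; auto).
    set (c := sumS enum (fun x => pif (X x) (mu x * hit enum p (Mall K M) X x) 0)) in *.
    assert (Hhf : hit_from enum p mu X (Mall K M) X = c / muS enum mu X) by reflexivity.
    rewrite Hhf in Hm.
    set (mX := muS enum mu X) in *. set (mi := muS enum mu (M i)) in *.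
    set (cm := cap enum p mu (M i) Mo) in *. set (pe := p_esc S enum p mu K M) in *.
    set (es := esc S enum p mu K M i) in *.
    assert (Hes : es * mi = cm) by (rewrite Hesc; field; lra).
    assert (Hes0 : 0 < es) by (rewrite Hesc; apply Rdiv_lt_0_compat; lra).
    set (q := INR K * pe).
    assert (Hq : 0 < q) by (unfold q; nra).
    assert (H1 : q * mX <= rho * c).
    { unfold q. apply Rmult_le_reg_r with (/ mX). apply Rinv_0_lt_compat; lra.
      rewrite Rmult_assoc, Rinv_r by lra. unfold Rdiv in Hm. lra. }
    assert (H2 : delta * c <= q * mi). { unfold q. rewrite <- Hes in PB.
      assert (es * mi <= pe * mi) by (apply Rmult_le_compat_r; lra).
      assert (INR K * (es * mi) <= INR K * (pe * mi)) by (apply Rmult_le_compat_l; lra). lra. }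
    apply Rmult_le_reg_l with (delta * q). nra.
    replace (delta * q * (rho * / delta * mi)) with (rho * (q * mi)) by (field; lra).
    nra.
Qed.
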